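(* In each calculus of the family $\mathsf{CL}^*$ the cut rule is admissible: for every relational atom or labelled formula $\mathcal{F}$, if $\Gamma\Rightarrow\Delta,\mathcal{F}$ and $\mathcal{F},\Gamma'\Rightarrow\Delta'$ are derivable, then $\Gamma,\Gamma'\Rightarrow\Delta,\Delta'$ is derivable.
   Context: Syntax: world labels $x,y,z,\dots$; neighbourhood labels $a,b,c,\dots$, including $\{x\}$ for each world label $x$. Relational atoms: $a\in N(x)$, $x\in a$, $a\subseteq b$. Labelled formulas: relational atoms, $x:A$, $a\Vdash^{\exists}A$, $a\Vdash^{\forall}A$, $x\Vdash_aA|B$ for formulas of $\mathcal{L}::=p\mid\bot\mid A\wedge B\mid A\lor B\mid A\to B\mid A>B$. Sequents $\Gamma\Rightarrow\Delta$: multisets, relational atoms only in the antecedent. Rules of $\mathsf{CL}$ (''(u!)'': $u$ not in conclusion; premisses / conclusion): initial sequents $x:p,\Gamma\Rightarrow\Delta,x:p$ ($p$ atomic), $x:\bot,\Gamma\Rightarrow\Delta$; G3 rules for $\wedge,\vee,\to$ on $x:A$; L$\forall$: $x:A,x\in a,a\Vdash^\forall A,\Gamma\Rightarrow\Delta$ / $x\in a,a\Vdash^\forall A,\Gamma\Rightarrow\Delta$; R$\forall$(x!): $x\in a,\Gamma\Rightarrow\Delta,x:A$ / $\Gamma\Rightarrow\Delta,a\Vdash^\forall A$; L$\exists$(x!): $x\in a,x:A,\Gamma\Rightarrow\Delta$ / $a\Vdash^\exists A,\Gamma\Rightarrow\Delta$; R$\exists$: $x\in a,\Gamma\Rightarrow\Delta,x:A,a\Vdash^\exists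 A$ / $x\in a,\Gamma\Rightarrow\Delta,a\Vdash^\exists A$; R$>$(a!): $a\in N(x),a\Vdash^\exists A,\Gamma\Rightarrow\Delta,x\Vdash_aA|B$ / $\Gamma\Rightarrow\Delta,x:A>B$; L$>$: $a\in N(x),x:A>B,\Gamma\Rightarrow\Delta,a\Vdash^\exists A$ and $x\Vdash_aA|B,a\in N(x),x:A>B,\Gamma\Rightarrow\Delta$ / $a\in N(x),x:A>B,\Gamma\Rightarrow\Delta$; R$|$: $c\in N(x),c\subseteq a,\Gamma\Rightarrow\Delta,x\Vdash_aA|B,c\Vdash^\exists A$ and $c\in N(x),c\subseteq a,\Gamma\Rightarrow\Delta,x\Vdash_aA|B,c\Vdash^\forall A\to B$ / $c\in N(x),c\subseteq a,\Gamma\Rightarrow\Delta,x\Vdash_aA|B$; L$|$(c!): $c\in N(x),c\subseteq a,c\Vdash^\exists A,c\Vdash^\forall A\to B,\Gamma\Rightarrow\Delta$ / $x\Vdash_aA|B,\Gamma\Rightarrow\Delta$; Ref: $a\subseteq a,\Gamma\Rightarrow\Delta$ / $\Gamma\Rightarrow\Delta$; Tr: $c\subseteq a,c\subseteq b,b\subseteq a,\Gamma\Rightarrow\Delta$ / $c\subseteq b,b\subseteq a,\Gamma\Rightarrow\Delta$; L$\subseteq$: $x\in a,a\subseteq b,x\in b,\Gamma\Rightarrow\Delta$ / $x\in a,a\subseteq b,\Gamma\Rightarrow\Delta$. Extension rules: N(a!): $a\in N(x),\Gamma\Rightarrow\Delta$ / $\Gamma\Rightarrow\Delta$; 0(y!):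 $y\in a,a\in N(x),\Gamma\Rightarrow\Delta$ / $a\in N(x),\Gamma\Rightarrow\Delta$; T(a!): $x\in a,a\in N(x),\Gamma\Rightarrow\Delta$ / $\Gamma\Rightarrow\Delta$; W: $x\in a,a\in N(x),\Gamma\Rightarrow\Delta$ / $a\in N(x),\Gamma\Rightarrow\Delta$; Single: $x\in\{x\},\{x\}\in N(x),\Gamma\Rightarrow\Delta$ / $\{x\}\in N(x),\Gamma\Rightarrow\Delta$; C: $\{x\}\in N(x),\{x\}\subseteq a,a\in N(x),\Gamma\Rightarrow\Delta$ / $a\in N(x),\Gamma\Rightarrow\Delta$; Repl$_1$: $y\in\{x\},At(x),At(y),\Gamma\Rightarrow\Delta$ / $y\in\{x\},At(x),\Gamma\Rightarrow\Delta$; Repl$_2$: same premiss / $y\in\{x\},At(y),\Gamma\Rightarrow\Delta$, with $At(x)$ among $x:P$ ($P$ atomic), $x\in a$, $a\in N(x)$, $x\in\{z\}$; U$_1$(c!): $z\in c,c\in N(x),a\in N(x),y\in a,b\in N(y),z\in b,\Gamma\Rightarrow\Delta$ / $a\in N(x),y\in a,b\in N(y),z\in b,\Gamma\Rightarrow\Delta$; U$_2$(c!): $z\in c,c\in N(y),a\in N(x),y\in a,b\in N(x),z\in b,\Gamma\Rightarrow\Delta$ / $a\in N(x),y\in a,b\in N(x),z\in b,\Gamma\Rightarrow\Delta$; A$_1$: $b\in N(y),a\in N(x),y\in a,b\in N(x),\Gamma\Rightarrow\Delta$ / $a\in N(x),y\in a,b\in N(x),\Gamma\Rightarrow\Delta$;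 A$_2$: $b\in N(x),a\in N(x),y\in a,b\in N(y),\Gamma\Rightarrow\Delta$ / $a\in N(x),y\in a,b\in N(y),\Gamma\Rightarrow\Delta$; plus contracted instances of U$_1$,U$_2$,A$_1$. Family $\mathsf{CL}^*$: $\mathsf{CL}$; $\mathsf{CL}^N=\mathsf{CL}+$N,0; $\mathsf{CL}^T=\mathsf{CL}^N+$T; $\mathsf{CL}^W=\mathsf{CL}^T+$W; $\mathsf{CL}^C=\mathsf{CL}^W+$C,Single,Repl$_1$,Repl$_2$; $\mathsf{CL}^U=\mathsf{CL}+$U$_1$,U$_2$; $\mathsf{CL}^{NU},\dots,\mathsf{CL}^{CU}$ = $\mathsf{CL}^N,\dots,\mathsf{CL}^C$ + U$_1$,U$_2$; $\mathsf{CL}^A=\mathsf{CL}+$A$_1$,A$_2$; $\mathsf{CL}^{NA},\dots,\mathsf{CL}^{CA}$ = $\mathsf{CL}^N,\dots,\mathsf{CL}^C$ + A$_1$,A$_2$. *)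

(* Defs.v *)
From Stdlib Require Import List Permutation.
Import ListNotations.

Inductive form : Type :=
| Atom (p : nat)
| Bot
| And (A B : form)
| Or (A B : form)
| Imp (A B : form)
| Cond (A B : form).

(* World labels are natural numbers; neighbourhood labels are either
   variables a,b,c,... or singletons {x} of a world label x. *)
Definition wlab := nat.
Inductive nlab : Type :=
| NV (n : nat)
| NS (x : wlab).

(* Relational atoms and labelled formulas (one syntactic category). *)
Inductive lform : Type :=
| LN (a : nlab) (x : wlab)                  (* a ∈ N(x) *)
| LIn (x : wlab) (a : nlab)
| LSub (a b : nlab)
| LW (x : wlab) (A : form)                  (* x : A *)
| LEx (a : nlab) (A : form)                 (* a ⊩∃ A *)
| LAll (a : nlab) (A : form)                (* a ⊩∀ A *)
| LCond (x : wlab) (a : nlab) (A B : form). (* x ⊩_a A | B *)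

Definition nlab_has_w (y : wlab) (a : nlab) : Prop := a = NS y.

Definition wocc (y : wlab) (F : lform) : Prop :=
  match F with
  | LN a x => nlab_has_w y a \/ x = y
  | LIn x a => x = y \/ nlab_has_w y a
  | LSub a b => nlab_has_w y a \/ nlab_has_w y b
  | LW x _ => x = y
  | LEx a _ => nlab_has_w y a
  | LAll a _ => nlab_has_w y a
  | LCond x a _ _ => x = y \/ nlab_has_w y a
  end.

Definition nocc (n : nat) (F : lform) : Prop :=
  match F with
  | LN a _ => a = NV n
  | LIn _ a => a = NV n
  | LSub a b => a = NV n \/ b = NV n
  | LW _ _ => False
  | LEx a _ => a = NV n
  | LAll a _ => a = NV n
  | LCond _ a _ _ => a = NV n
  end.

Definition wfresh (y : wlab) (l : list lform) : Prop :=
  forall F, In F l -> ~ wocc y F.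
Definition nfresh (n : nat) (l : list lform) : Prop :=
  forall F, In F l -> ~ nocc n F.

(* Atoms At(x) for the replacement rules: x:P, x ∈ a, a ∈ N(x), x ∈ {z} *)
Inductive attmpl : Type :=
| TP (p : nat) | TIn (a : nlab) | TN (a : nlab) | TSing (z : wlab).

Definition atI (t : attmpl) (w : wlab) : lform :=
  match t with
  | TP p => LW w (Atom p)
  | TIn a => LIn w a
  | TN a => LN a w
  | TSing z => LIn w (NS z)
  end.

(* P is a (possibly) contracted instance of the multiset of principal
   atoms Full: P is a sub-multiset of Full containing each atom of Full. *)
Definition contr (P Full : list lform) : Prop :=
  incl Full P /\ exists R, Permutation Full (P ++ R).

Inductive calc : Type :=
| cCL | cN | cT | cW | cC
| cU | cNU | cTU | cWU | cCU
| cA | cNA | cTA | cWA | cCA.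

Definition hasN (s : calc) : bool :=
  match s with
  | cN | cT | cW | cC | cNU | cTU | cWU | cCU | cNA | cTA | cWA | cCA => true
  | _ => false end.
Definition hasT (s : calc) : bool :=
  match s with
  | cT | cW | cC | cTU | cWU | cCU | cTA | cWA | cCA => true
  | _ => false end.
Definition hasW (s : calc) : bool :=
  match s with
  | cW | cC | cWU | cCU | cWA | cCA => true
  | _ => false end.
Definition hasC (s : calc) : bool :=
  match s with cC | cCU | cCA => true | _ => false end.
Definition hasU (s : calc) : bool :=
  match s with cU | cNU | cTU | cWU | cCU => true | _ => false end.
Definition hasA (s : calc) : bool :=
  match s with cA | cNA | cTA | cWA | cCA => true | _ => false end.

(* Derivability of the sequent G => D in calculus s.  Sequents are
   multisets, modelled as lists up to permutation (rule der_perm). *)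
Inductive der (s : calc) : list lform -> list lform -> Prop :=
| der_perm G G' D D' :
    Permutation G G' -> Permutation D D' -> der s G D -> der s G' D'
| ax_p x p G D : der s (LW x (Atom p) :: G) (LW x (Atom p) :: D)
| ax_bot x G D : der s (LW x Bot :: G) D
| L_and x A B G D :
    der s (LW x A :: LW x B :: G) D -> der s (LW x (And A B) :: G) D
| R_and x A B G D :
    der s G (LW x A :: D) -> der s G (LW x B :: D) ->
    der s G (LW x (And A B) :: D)
| L_or x A B G D :
    der s (LW x A :: G) D -> der s (LW x B :: G) D ->
    der s (LW x (Or A B) :: G) D
| R_or x A B G D :
    der s G (LW x A :: LW x B :: D) -> der s G (LW x (Or A B) :: D)
| L_imp x A B G D :
    der s G (LW x A :: D) -> der s (LW x B :: G) D ->
    der s (LW x (Imp A B) :: G) D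
| R_imp x A B G D :
    der s (LW x A :: G) (LW x B :: D) -> der s G (LW x (Imp A B) :: D)
| L_all x a A G D :
    der s (LW x A :: LIn x a :: LAll a A :: G) D ->
    der s (LIn x a :: LAll a A :: G) D
| R_all x a A G D :
    wfresh x (G ++ LAll a A :: D) ->
    der s (LIn x a :: G) (LW x A :: D) -> der s G (LAll a A :: D)
| L_ex x a A G D :
    wfresh x (LEx a A :: G ++ D) ->
    der s (LIn x a :: LW x A :: G) D -> der s (LEx a A :: G) D
| R_ex x a A G D :
    der s (LIn x a :: G) (LW x A :: LEx a A :: D) ->
    der s (LIn x a :: G) (LEx a A :: D)
| R_cond n x A B G D :
    nfresh n (G ++ LW x (Cond A B) :: D) ->
    der s (LN (NV n) x :: LEx (NV n) A :: G) (LCond x (NV n) A B :: D) ->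
    der s G (LW x (Cond A B) :: D)
| L_cond a x A B G D :
    der s (LN a x :: LW x (Cond A B) :: G) (LEx a A :: D) ->
    der s (LCond x a A B :: LN a x :: LW x (Cond A B) :: G) D ->
    der s (LN a x :: LW x (Cond A B) :: G) D
| R_bar c x a A B G D :
    der s (LN c x :: LSub c a :: G) (LCond x a A B :: LEx c A :: D) ->
    der s (LN c x :: LSub c a :: G) (LCond x a A B :: LAll c (Imp A B) :: D) ->
    der s (LN c x :: LSub c a :: G) (LCond x a A B :: D)
| L_bar n x a A B G D :
    nfresh n (LCond x a A B :: G ++ D) ->
    der s (LN (NV n) x :: LSub (NV n) a :: LEx (NV n) A
             :: LAll (NV n) (Imp A B) :: G) D ->
    der s (LCond x a A B :: G) D
| r_Ref a G D : der s (LSub a a :: G) D -> der s G D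
| r_Tr c a b G D :
    der s (LSub c a :: LSub c b :: LSub b a :: G) D ->
    der s (LSub c b :: LSub b a :: G) D
| L_sub x a b G D :
    der s (LIn x a :: LSub a b :: LIn x b :: G) D ->
    der s (LIn x a :: LSub a b :: G) D
| r_N n x G D :
    hasN s = true -> nfresh n (G ++ D) ->
    der s (LN (NV n) x :: G) D -> der s G D
| r_0 y a x G D :
    hasN s = true -> wfresh y (LN a x :: G ++ D) ->
    der s (LIn y a :: LN a x :: G) D -> der s (LN a x :: G) D
| r_T n x G D :
    hasT s = true -> nfresh n (G ++ D) ->
    der s (LIn x (NV n) :: LN (NV n) x :: G) D -> der s G D
| r_W x a G D :
    hasW s = true ->
    der s (LIn x a :: LN a x :: G) D -> der s (LN a x :: G) D
| r_Single x G D :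
    hasC s = true ->
    der s (LIn x (NS x) :: LN (NS x) x :: G) D -> der s (LN (NS x) x :: G) D
| r_C x a G D :
    hasC s = true ->
    der s (LN (NS x) x :: LSub (NS x) a :: LN a x :: G) D ->
    der s (LN a x :: G) D
| r_Repl1 y x t G D :
    hasC s = true ->
    der s (LIn y (NS x) :: atI t x :: atI t y :: G) D ->
    der s (LIn y (NS x) :: atI t x :: G) D
| r_Repl2 y x t G D :
    hasC s = true ->
    der s (LIn y (NS x) :: atI t x :: atI t y :: G) D ->
    der s (LIn y (NS x) :: atI t y :: G) D
| r_U1 n a b x y z P G D :
    hasU s = true ->
    contr P [LN a x; LIn y a; LN b y; LIn z b] ->
    nfresh n (P ++ G ++ D) ->
    der s (LIn z (NV n) :: LN (NV n) x :: P ++ G) D -> der s (P ++ G) D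
| r_U2 n a b x y z P G D :
    hasU s = true ->
    contr P [LN a x; LIn y a; LN b x; LIn z b] ->
    nfresh n (P ++ G ++ D) ->
    der s (LIn z (NV n) :: LN (NV n) y :: P ++ G) D -> der s (P ++ G) D
| r_A1 a b x y P G D :
    hasA s = true ->
    contr P [LN a x; LIn y a; LN b x] ->
    der s (LN b y :: P ++ G) D -> der s (P ++ G) D
| r_A2 a b x y G D :
    hasA s = true ->
    der s (LN b x :: LN a x :: LIn y a :: LN b y :: G) D ->
    der s (LN a x :: LIn y a :: LN b y :: G) D.

(* Main.v *)
Require Import Defs.
From Stdlib Require Import List Permutation Lia Arith.
Import ListNotations.

Definition form_eq_dec : forall A B : form, {A = B} + {A <> B}.
Proof. decide equality; apply Nat.eq_dec. Qed.
Definition nlab_eq_dec : forall a b : nlab, {a = b} + {a <> b}.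
Proof. decide equality; apply Nat.eq_dec. Qed.
Definition lform_eq_dec : forall a b : lform, {a = b} + {a <> b}.
Proof. decide equality; try apply Nat.eq_dec; try apply nlab_eq_dec; apply form_eq_dec. Qed.

Lemma count_rep F n x : count_occ lform_eq_dec (repeat F n) x = if lform_eq_dec F x then n else 0.
Proof. induction n; simpl; destruct (lform_eq_dec F x); simpl; auto. Qed.

Ltac solve_perm :=
  apply (Permutation_count_occ lform_eq_dec); let xx := fresh "xx" in intro xx;
  repeat match goal with H : Permutation _ _ |- _ =>
     pose proof (proj1 (Permutation_count_occ lform_eq_dec _ _) H xx); clear H end;
  repeat match goal with H : count_occ _ _ xx = _ |- _ => revert H end;
  repeat progress (rewrite ?app_nil_r, ?map_app, ?count_occ_app, ?count_rep; simpl);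
  repeat (match goal with |- context [lform_eq_dec ?a xx] => destruct (lform_eq_dec a xx) end);
  intros; lia.


Inductive eig := ENone | EW (z : nat) | EN (n : nat).
Record rl := mkR { pa : list lform; ps : list lform;
                   prs : list (list lform * list lform); eg : eig }.

Definition freshfor (e : eig) (l : list lform) : Prop :=
  match e with ENone => True | EW z => wfresh z l | EN n => nfresh n l end.

Inductive inst (s : calc) : rl -> Prop :=
| i_ax x p : inst s (mkR [LW x (Atom p)] [LW x (Atom p)] [] ENone)
| i_bot x : inst s (mkR [LW x Bot] [] [] ENone)
| i_Land x A B : inst s (mkR [LW x (And A B)] [] [([LW x A; LW x B], [])] ENone)
| i_Rand x A B : inst s (mkR [] [LW x (And A B)] [([], [LW x A]); ([], [LW x B])] ENone)
| i_Lor x A B : inst s (mkR [LW x (Or A B)] [] [([LW x A], []); ([LW x B], [])] ENone)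
| i_Ror x A B : inst s (mkR [] [LW x (Or A B)] [([], [LW x A; LW x B])] ENone)
| i_Limp x A B : inst s (mkR [LW x (Imp A B)] [] [([], [LW x A]); ([LW x B], [])] ENone)
| i_Rimp x A B : inst s (mkR [] [LW x (Imp A B)] [([LW x A], [LW x B])] ENone)
| i_Lall x a A : inst s (mkR [LIn x a; LAll a A] [] [([LW x A; LIn x a; LAll a A], [])] ENone)
| i_Rall x a A : inst s (mkR [] [LAll a A] [([LIn x a], [LW x A])] (EW x))
| i_Lex x a A : inst s (mkR [LEx a A] [] [([LIn x a; LW x A], [])] (EW x))
| i_Rex x a A : inst s (mkR [LIn x a] [LEx a A] [([LIn x a], [LW x A; LEx a A])] ENone)
| i_Rcond n x A B : inst s (mkR [] [LW x (Cond A B)]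
     [([LN (NV n) x; LEx (NV n) A], [LCond x (NV n) A B])] (EN n))
| i_Lcond a x A B : inst s (mkR [LN a x; LW x (Cond A B)] []
     [([LN a x; LW x (Cond A B)], [LEx a A]);
      ([LCond x a A B; LN a x; LW x (Cond A B)], [])] ENone)
| i_Rbar c x a A B : inst s (mkR [LN c x; LSub c a] [LCond x a A B]
     [([LN c x; LSub c a], [LCond x a A B; LEx c A]);
      ([LN c x; LSub c a], [LCond x a A B; LAll c (Imp A B)])] ENone)
| i_Lbar n x a A B : inst s (mkR [LCond x a A B] []
     [([LN (NV n) x; LSub (NV n) a; LEx (NV n) A; LAll (NV n) (Imp A B)], [])] (EN n))
| i_Ref a : inst s (mkR [] [] [([LSub a a], [])] ENone)
| i_Tr c a b : inst s (mkR [LSub c b; LSub b a] [] [([LSub c a; LSub c b; LSub b a], [])] ENone)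
| i_Lsub x a b : inst s (mkR [LIn x a; LSub a b] [] [([LIn x a; LSub a b; LIn x b], [])] ENone)
| i_N n x : hasN s = true -> inst s (mkR [] [] [([LN (NV n) x], [])] (EN n))
| i_0 y a x : hasN s = true -> inst s (mkR [LN a x] [] [([LIn y a; LN a x], [])] (EW y))
| i_T n x : hasT s = true -> inst s (mkR [] [] [([LIn x (NV n); LN (NV n) x], [])] (EN n))
| i_W x a : hasW s = true -> inst s (mkR [LN a x] [] [([LIn x a; LN a x], [])] ENone)
| i_Single x : hasC s = true ->
    inst s (mkR [LN (NS x) x] [] [([LIn x (NS x); LN (NS x) x], [])] ENone)
| i_C x a : hasC s = true ->
    inst s (mkR [LN a x] [] [([LN (NS x) x; LSub (NS x) a; LN a x], [])] ENone)
| i_Repl1 y x t : hasC s = true ->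
    inst s (mkR [LIn y (NS x); atI t x] [] [([LIn y (NS x); atI t x; atI t y], [])] ENone)
| i_Repl2 y x t : hasC s = true ->
    inst s (mkR [LIn y (NS x); atI t y] [] [([LIn y (NS x); atI t x; atI t y], [])] ENone)
| i_U1 n a b x y z P : hasU s = true -> contr P [LN a x; LIn y a; LN b y; LIn z b] ->
    inst s (mkR P [] [(LIn z (NV n) :: LN (NV n) x :: P, [])] (EN n))
| i_U2 n a b x y z P : hasU s = true -> contr P [LN a x; LIn y a; LN b x; LIn z b] ->
    inst s (mkR P [] [(LIn z (NV n) :: LN (NV n) y :: P, [])] (EN n))
| i_A1 a b x y P : hasA s = true -> contr P [LN a x; LIn y a; LN b x] ->
    inst s (mkR P [] [(LN b y :: P, [])] ENone)
| i_A2 a b x y : hasA s = true ->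
    inst s (mkR [LN a x; LIn y a; LN b y] [] [([LN b x; LN a x; LIn y a; LN b y], [])] ENone).

Inductive gd (s : calc) : list lform -> list lform -> Prop :=
| gd_r r Γ Δ G D : inst s r -> Permutation G (pa r ++ Γ) -> Permutation D (ps r ++ Δ) ->
    freshfor (eg r) (pa r ++ ps r ++ Γ ++ Δ) ->
    (forall Q R, In (Q, R) (prs r) -> gd s (Q ++ Γ) (R ++ Δ)) -> gd s G D.

Lemma gd_perm s G D G' D' : gd s G D -> Permutation G G' -> Permutation D D' -> gd s G' D'.
Proof.
  intros H HG HD. destruct H as [r Γ Δ G D Hi H1 H2 Hf Hp].
  apply gd_r with r Γ Δ; auto.
  - apply Permutation_trans with G; auto. apply Permutation_sym; auto.
  - apply Permutation_trans with D; auto. apply Permutation_sym; auto.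
Qed.

Lemma wfresh_incl x l1 l2 : incl l1 l2 -> wfresh x l2 -> wfresh x l1.
Proof. unfold wfresh; intros Hi Hf F HF; apply Hf, Hi, HF. Qed.
Lemma nfresh_incl x l1 l2 : incl l1 l2 -> nfresh x l2 -> nfresh x l1.
Proof. unfold nfresh; intros Hi Hf F HF; apply Hf, Hi, HF. Qed.
Lemma freshfor_incl e l1 l2 : incl l1 l2 -> freshfor e l2 -> freshfor e l1.
Proof. destruct e; simpl; eauto using wfresh_incl, nfresh_incl. Qed.
Lemma freshfor_app e l1 l2 : freshfor e l1 -> freshfor e l2 -> freshfor e (l1 ++ l2).
Proof.
  destruct e; simpl; auto; unfold wfresh, nfresh; intros H1 H2 F HF;
  apply in_app_or in HF; destruct HF; auto.
Qed.

Ltac solve_incl := let z := fresh "z" in let Hz := fresh "Hz" in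
  intros z Hz; repeat match goal with Hi : incl _ _ |- _ => specialize (Hi z) end;
  simpl in *; repeat (rewrite in_app_iff in * ; simpl in * ); tauto.

Ltac prem_cases Hin := simpl in Hin;
  repeat match type of Hin with
  | _ \/ _ => destruct Hin as [Hin|Hin]
  | False => destruct Hin
  | (_, _) = (_, _) => injection Hin as <- <-
  end.


Ltac fin c G D :=
  eapply gd_r with (Γ := G) (Δ := D); [ solve [eapply c; eauto] | simpl; solve_perm | simpl; solve_perm
  | simpl; first [exact I | (eapply wfresh_incl || eapply nfresh_incl); [|eassumption]; solve_incl]
  | let Q := fresh "Q" in let R := fresh "R" in let Hin := fresh "Hin" in
    intros Q R Hin; prem_cases Hin; simpl; assumption ].

Lemma der_gd s G D : der s G D -> gd s G D.
Proof.
  induction 1.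
  - eapply gd_perm; eauto.
  - fin (i_ax s x p) G D. 
  - fin (i_bot s x) G D.
  - fin (i_Land s x A B) G D.
  - fin (i_Rand s x A B) G D.
  - fin (i_Lor s x A B) G D.
  - fin (i_Ror s x A B) G D.
  - fin (i_Limp s x A B) G D.
  - fin (i_Rimp s x A B) G D.
  - fin (i_Lall s x a A) G D.
  - fin (i_Rall s x a A) G D.
  - fin (i_Lex s x a A) G D.
  - fin (i_Rex s x a A) G D.
  - fin (i_Rcond s n x A B) G D.
  - fin (i_Lcond s a x A B) G D.
  - fin (i_Rbar s c x a A B) G D.
  - fin (i_Lbar s n x a A B) G D.
  - fin (i_Ref s a) G D.
  - fin (i_Tr s c a b) G D.
  - fin (i_Lsub s x a b) G D.
  - fin (i_N s n x) G D.
  - fin (i_0 s y a x) G D.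
  - fin (i_T s n x) G D.
  - fin (i_W s x a) G D.
  - fin (i_Single s x) G D.
  - fin (i_C s x a) G D.
  - fin (i_Repl1 s y x t) G D.
  - fin (i_Repl2 s y x t) G D.
  - fin (i_U1 s n a b x y z P) G D.
  - fin (i_U2 s n a b x y z P) G D.
  - fin (i_A1 s a b x y P) G D.
  - fin (i_A2 s a b x y) G D.
Qed.

Ltac fr Hf := first [ eapply wfresh_incl; [|exact Hf]; solve_incl
                    | eapply nfresh_incl; [|exact Hf]; solve_incl ].

Lemma gd_der s G D : gd s G D -> der s G D.
Proof.
  induction 1 as [r Γ Δ G D Hi HG HD Hf Hp IH].
  apply der_perm with (pa r ++ Γ) (ps r ++ Δ); try (apply Permutation_sym; assumption).
  destruct Hi; simpl in *;
  try pose proof (IH _ _ (or_introl eq_refl)) as I1;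
  try pose proof (IH _ _ (or_intror (or_introl eq_refl))) as I2; simpl in *.
  - apply ax_p.
  - apply ax_bot.
  - apply L_and; auto.
  - apply R_and; auto.
  - apply L_or; auto.
  - apply R_or; auto.
  - apply L_imp; auto.
  - apply R_imp; auto.
  - apply L_all; auto.
  - apply R_all with x; [fr Hf | auto].
  - apply L_ex with x; [fr Hf | auto].
  - apply R_ex; auto.
  - apply R_cond with n; [fr Hf | auto].
  - apply L_cond; auto.
  - apply R_bar; auto.
  - apply L_bar with n; [fr Hf | auto].
  - apply r_Ref with a; auto.
  - apply r_Tr; auto.
  - apply L_sub; auto.
  - apply r_N with n x; [auto | fr Hf | auto].
  - apply r_0 with y; [auto | fr Hf | auto].
  - apply r_T with n x; [auto | fr Hf | auto].
  - apply r_W; auto.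
  - apply r_Single; auto.
  - apply r_C; auto.
  - apply r_Repl1; auto.
  - apply r_Repl2; auto.
  - eapply r_U1; eauto; fr Hf.
  - eapply r_U2; eauto; fr Hf.
  - eapply r_A1; eauto.
  - apply r_A2; auto.
Qed.

Record sub := mkS { sw : nat -> nat; sn : nat -> nlab }.
Definition snl (σ : sub) (a : nlab) : nlab :=
  match a with NV n => sn σ n | NS x => NS (sw σ x) end.
Definition sf (σ : sub) (F : lform) : lform :=
  match F with
  | LN a x => LN (snl σ a) (sw σ x)
  | LIn x a => LIn (sw σ x) (snl σ a)
  | LSub a b => LSub (snl σ a) (snl σ b)
  | LW x A => LW (sw σ x) A
  | LEx a A => LEx (snl σ a) A
  | LAll a A => LAll (snl σ a) A
  | LCond x a A B => LCond (sw σ x) (snl σ a) A B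
  end.
Definition st (σ : sub) (t : attmpl) : attmpl :=
  match t with TP p => TP p | TIn a => TIn (snl σ a) | TN a => TN (snl σ a)
  | TSing z => TSing (sw σ z) end.
Lemma sf_atI σ t w : sf σ (atI t w) = atI (st σ t) (sw σ w).
Proof. destruct t; reflexivity. Qed.
Definition se (σ : sub) (e : eig) : eig :=
  match e with ENone => ENone | EW z => EW (sw σ z)
  | EN n => match sn σ n with NV n' => EN n' | NS _ => ENone end end.
Definition sq (σ : sub) (p : list lform * list lform) :=
  (map (sf σ) (fst p), map (sf σ) (snd p)).
Definition sr (σ : sub) (r : rl) : rl :=
  mkR (map (sf σ) (pa r)) (map (sf σ) (ps r)) (map (sq σ) (prs r)) (se σ (eg r)).

Lemma contr_map f P Full : contr P Full -> contr (map f P) (map f Full).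
Proof.
  intros [H1 [R H2]]. split.
  - apply incl_map; auto.
  - exists (map f R). rewrite <- map_app. apply Permutation_map; auto.
Qed.

Lemma inst_sub s σ r : inst s r -> (forall n, eg r = EN n -> exists n', sn σ n = NV n') ->
  inst s (sr σ r).
Proof.
  intros Hi Hn. destruct Hi; unfold sr, sq; simpl in *;
  try (destruct (Hn _ eq_refl) as [n' E]; rewrite E);
  rewrite ?sf_atI; try (constructor; auto; fail).
  all: match goal with H : contr _ _ |- _ => apply (contr_map (sf σ)) in H; simpl in H end;
    solve [eapply i_U1; eauto | eapply i_U2; eauto | eapply i_A1; eauto].
Qed.

Definition nlw (a : nlab) := match a with NS x => [x] | NV _ => [] end.
Definition nln (a : nlab) := match a with NV n => [n] | NS _ => [] end.
Definition wl (F : lform) : list nat :=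
  match F with
  | LN a x => x :: nlw a | LIn x a => x :: nlw a | LSub a b => nlw a ++ nlw b
  | LW x _ => [x] | LEx a _ => nlw a | LAll a _ => nlw a | LCond x a _ _ => x :: nlw a
  end.
Definition nl (F : lform) : list nat :=
  match F with
  | LN a x => nln a | LIn x a => nln a | LSub a b => nln a ++ nln b
  | LW x _ => [] | LEx a _ => nln a | LAll a _ => nln a | LCond x a _ _ => nln a
  end.
Lemma wocc_wl y F : wocc y F -> In y (wl F).
Proof.
  destruct F; simpl; unfold nlab_has_w; intros H;
  repeat match goal with H : _ \/ _ |- _ => destruct H end; subst; simpl;
  rewrite ?in_app_iff; simpl; auto.
Qed.
Lemma nocc_nl n F : nocc n F -> In n (nl F).
Proof.
  destruct F; simpl; intros H;
  repeat match goal with H : _ \/ _ |- _ => destruct H end; subst; simpl;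
  rewrite ?in_app_iff; simpl; auto; contradiction.
Qed.
Definition fresh_w l := S (list_max (flat_map wl l)).
Definition fresh_n l := S (list_max (flat_map nl l)).
Lemma list_max_in k l : In k l -> k <= list_max l.
Proof.
  intros H. pose proof (proj1 (list_max_le l (list_max l)) (le_n _)) as HF.
  rewrite Forall_forall in HF. auto.
Qed.
Lemma fresh_w_ok l : wfresh (fresh_w l) l.
Proof.
  intros F HF Ho. apply wocc_wl in Ho.
  assert (In (fresh_w l) (flat_map wl l)) by (apply in_flat_map; eauto).
  apply list_max_in in H. unfold fresh_w in H. lia.
Qed.
Lemma fresh_n_ok l : nfresh (fresh_n l) l.
Proof.
  intros F HF Ho. apply nocc_nl in Ho.
  assert (In (fresh_n l) (flat_map nl l)) by (apply in_flat_map; eauto).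
  apply list_max_in in H. unfold fresh_n in H. lia.
Qed.

Definition upd_w σ z z' := mkS (fun w => if Nat.eq_dec w z then z' else sw σ w) (sn σ).
Definition upd_n σ n b := mkS (sw σ) (fun m => if Nat.eq_dec m n then b else sn σ m).

Lemma agree_w σ z z' F : ~ wocc z F -> sf (upd_w σ z z') F = sf σ F.
Proof.
  destruct F; simpl; unfold nlab_has_w, snl; intros H;
  repeat match goal with |- context [match ?a with NV _ => _ | NS _ => _ end] =>
    destruct a end; simpl;
  repeat (destruct Nat.eq_dec; subst); try tauto; reflexivity.
Qed.
Lemma agree_n σ n b F : ~ nocc n F -> sf (upd_n σ n b) F = sf σ F.
Proof.
  destruct F; simpl; unfold snl; intros H;
  repeat match goal with |- context [match ?a with NV _ => _ | NS _ => _ end] =>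
    destruct a end; simpl;
  repeat (destruct Nat.eq_dec; subst); try tauto; reflexivity.
Qed.

Lemma map_agree σ σ' l : (forall F, In F l -> sf σ' F = sf σ F) -> map (sf σ') l = map (sf σ) l.
Proof. intros; apply map_ext_in; auto. Qed.

Lemma eigen_rename s r Γ Δ σ L : inst s r -> freshfor (eg r) (pa r ++ ps r ++ Γ ++ Δ) ->
  exists σ', inst s (sr σ' r) /\
    (forall F, In F (pa r ++ ps r ++ Γ ++ Δ) -> sf σ' F = sf σ F) /\
    freshfor (eg (sr σ' r)) (map (sf σ) (pa r ++ ps r ++ Γ ++ Δ) ++ L).
Proof.
  intros Hi Hf. change (eg (sr ?x r)) with (se x (eg r)).
  destruct (eg r) eqn:E; simpl in Hf.
  - exists σ. split; [apply inst_sub; auto; intros n Hn; congruence | split; [auto | simpl; exact I]].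
  - set (z' := fresh_w (map (sf σ) (pa r ++ ps r ++ Γ ++ Δ) ++ L)).
    exists (upd_w σ z z'). split; [|split].
    + apply inst_sub; auto. intros n Hn; congruence.
    + intros F HF. apply agree_w. apply Hf. auto.
    + simpl. destruct Nat.eq_dec; [|congruence]. apply fresh_w_ok.
  - set (n' := fresh_n (map (sf σ) (pa r ++ ps r ++ Γ ++ Δ) ++ L)).
    exists (upd_n σ n (NV n')). split; [|split].
    + apply inst_sub; auto. intros m Hm. rewrite E in Hm. injection Hm as <-.
      simpl. destruct Nat.eq_dec; [|congruence]. eauto.
    + intros F HF. apply agree_n. apply Hf. auto.
    + simpl. destruct Nat.eq_dec; [|congruence]. apply fresh_n_ok.
Qed.

Lemma in_prs_sr σ r Q' R' : In (Q', R') (prs (sr σ r)) ->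
  exists Q R, In (Q, R) (prs r) /\ Q' = map (sf σ) Q /\ R' = map (sf σ) R.
Proof.
  simpl. intros H. apply in_map_iff in H as [[Q R] [E H]].
  unfold sq in E; simpl in E. injection E as <- <-. eauto.
Qed.

Lemma agree_sub σ σ' l1 l2 : (forall F, In F l2 -> sf σ' F = sf σ F) -> incl l1 l2 ->
  map (sf σ') l1 = map (sf σ) l1.
Proof. intros H Hi; apply map_agree; auto. Qed.

Ltac agree Hag := erewrite (agree_sub _ _ _ _ Hag) by solve_incl.

Lemma SW s G D : gd s G D -> forall σ G' D',
  gd s (map (sf σ) G ++ G') (map (sf σ) D ++ D').
Proof.
  induction 1 as [r Γ Δ G D Hi HG HD Hf Hp IH]. intros σ G' D'.
  destruct (eigen_rename s r Γ Δ σ (G' ++ D') Hi Hf) as [σ' [Hi' [Hag Hf']]].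
  apply gd_r with (r := sr σ' r) (Γ := map (sf σ) Γ ++ G') (Δ := map (sf σ) Δ ++ D'); auto.
  - simpl. agree Hag. apply (Permutation_map (sf σ)) in HG. rewrite map_app in HG. solve_perm.
  - simpl. agree Hag. apply (Permutation_map (sf σ)) in HD. rewrite map_app in HD. solve_perm.
  - eapply freshfor_incl; [|exact Hf']. simpl. agree Hag. agree Hag. rewrite !map_app. solve_incl.
  - intros Q' R' Hin. apply in_prs_sr in Hin as [Q [R [Hin [-> ->]]]].
    specialize (IH Q R Hin σ' G' D'). rewrite !map_app in IH.
    rewrite (agree_sub _ _ Γ _ Hag) in IH by solve_incl.
    rewrite (agree_sub _ _ Δ _ Hag) in IH by solve_incl.
    rewrite <- !app_assoc in IH. exact IH.
Qed.

Definition sid := mkS (fun x => x) NV.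
Lemma sf_sid F : sf sid F = F.
Proof. destruct F; simpl; repeat match goal with a : nlab |- _ => destruct a end; reflexivity. Qed.
Lemma map_sid l : map (sf sid) l = l.
Proof. induction l; simpl; rewrite ?sf_sid; congruence. Qed.

Lemma weak s G D G' D' : gd s G D -> gd s (G ++ G') (D ++ D').
Proof. intros H. pose proof (SW s G D H sid G' D') as H'. rewrite !map_sid in H'. exact H'. Qed.

Lemma freshfor_single e l : (forall F, In F l -> freshfor e [F]) -> freshfor e l.
Proof.
  destruct e; simpl; auto; unfold wfresh, nfresh; intros H F HF; apply (H F HF); simpl; auto.
Qed.
Lemma freshfor_elem e l F : freshfor e l -> In F l -> freshfor e [F].
Proof.
  destruct e; simpl; auto; unfold wfresh, nfresh; intros H HF G [<-|[]]; auto.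
Qed.

Lemma perm_in_split (F : lform) l : In F l -> exists l0, Permutation l (F :: l0).
Proof.
  intros H. apply in_split in H as [l1 [l2 ->]]. exists (l1 ++ l2).
  apply Permutation_sym, Permutation_middle.
Qed.

Lemma invL s F Q R
  (Hpr : forall r, inst s r -> In F (pa r) -> pa r = [F] /\ ps r = [] /\ In (Q, R) (prs r))
  (Hlab : forall e, freshfor e [F] -> freshfor e (Q ++ R)) :
  forall H K, gd s H K -> forall G0, Permutation H (F :: G0) -> gd s (Q ++ G0) (R ++ K).
Proof.
  induction 1 as [r Γ Δ G D Hi HG HD Hf Hp IH]. intros G0 HP.
  destruct (in_dec lform_eq_dec F (pa r)) as [Hin|Hnin].
  - destruct (Hpr r Hi Hin) as [E1 [E2 E3]]. rewrite E1 in HG. rewrite E2 in HD.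
    eapply gd_perm; [apply (Hp _ _ E3) | |].
    + assert (Permutation G0 Γ). { apply Permutation_cons_inv with F.
        eapply Permutation_trans; [apply Permutation_sym, HP | exact HG]. }
      solve_perm.
    + solve_perm.
  - assert (HinG : In F Γ).
    { assert (In F (pa r ++ Γ)) by (eapply Permutation_in; [exact HG|];
        eapply Permutation_in; [apply Permutation_sym, HP| left; auto]).
      apply in_app_or in H; tauto. }
    destruct (perm_in_split F Γ HinG) as [Γ0 HΓ].
    apply gd_r with r (Q ++ Γ0) (R ++ Δ); auto.
    + solve_perm.
    + solve_perm.
    + apply freshfor_single. intros F' HF'.
      assert (Hi0 : incl Γ0 Γ) by (intros z Hz; eapply Permutation_in;
         [apply Permutation_sym, HΓ | right; auto]).
      assert (HFF : freshfor (eg r) (Q ++ R)) by (apply Hlab; eapply freshfor_elem; [exact Hf|];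
         rewrite !in_app_iff; auto).
      rewrite !in_app_iff in HF'.
      destruct HF' as [HF'|[HF'|[[HF'|HF']|[HF'|HF']]]];
        try (apply Hi0 in HF');
        first [ solve [eapply freshfor_elem; [exact HFF|]; rewrite in_app_iff; auto]
              | solve [eapply freshfor_elem; [exact Hf|]; rewrite !in_app_iff; auto 7] ].
    + intros Q' R' Hin. eapply gd_perm; [apply (IH Q' R' Hin (Q' ++ Γ0))| |]; solve_perm.
Qed.

Lemma invR s F Q R
  (Hpr : forall r, inst s r -> In F (ps r) -> ps r = [F] /\ pa r = [] /\ In (Q, R) (prs r))
  (Hlab : forall e, freshfor e [F] -> freshfor e (Q ++ R)) :
  forall H K, gd s H K -> forall D0, Permutation K (F :: D0) -> gd s (Q ++ H) (R ++ D0).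
Proof.
  induction 1 as [r Γ Δ G D Hi HG HD Hf Hp IH]. intros D0 HP.
  destruct (in_dec lform_eq_dec F (ps r)) as [Hin|Hnin].
  - destruct (Hpr r Hi Hin) as [E1 [E2 E3]]. rewrite E1 in HD. rewrite E2 in HG.
    eapply gd_perm; [apply (Hp _ _ E3) | |].
    + solve_perm.
    + assert (Permutation D0 Δ). { apply Permutation_cons_inv with F.
        eapply Permutation_trans; [apply Permutation_sym, HP | exact HD]. }
      solve_perm.
  - assert (HinG : In F Δ).
    { assert (In F (ps r ++ Δ)) by (eapply Permutation_in; [exact HD|];
        eapply Permutation_in; [apply Permutation_sym, HP| left; auto]).
      apply in_app_or in H; tauto. }
    destruct (perm_in_split F Δ HinG) as [Δ0 HΔ].
    apply gd_r with r (Q ++ Γ) (R ++ Δ0); auto.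
    + solve_perm.
    + solve_perm.
    + apply freshfor_single. intros F' HF'.
      assert (Hi0 : incl Δ0 Δ) by (intros z Hz; eapply Permutation_in;
         [apply Permutation_sym, HΔ | right; auto]).
      assert (HFF : freshfor (eg r) (Q ++ R)) by (apply Hlab; eapply freshfor_elem; [exact Hf|];
         rewrite !in_app_iff; auto).
      rewrite !in_app_iff in HF'.
      destruct HF' as [HF'|[HF'|[[HF'|HF']|[HF'|HF']]]];
        try (apply Hi0 in HF');
        first [ solve [eapply freshfor_elem; [exact HFF|]; rewrite in_app_iff; auto]
              | solve [eapply freshfor_elem; [exact Hf|]; rewrite !in_app_iff; auto 7] ].
    + intros Q' R' Hin. eapply gd_perm; [apply (IH Q' R' Hin (R' ++ Δ0))| |]; solve_perm.
Qed.

Lemma perm_incl (l1 l2 : list lform) : Permutation l1 l2 -> incl l2 l1.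
Proof. intros H z Hz. eapply Permutation_in; [apply Permutation_sym, H| exact Hz]. Qed.

Lemma in_nonprinc (F : lform) P Γ G G0 : Permutation G (P ++ Γ) -> Permutation G (F :: G0) ->
  ~ In F P -> exists Γ0, Permutation Γ (F :: Γ0) /\ Permutation G0 (P ++ Γ0).
Proof.
  intros H1 H2 Hn.
  assert (In F Γ).
  { assert (In F (P ++ Γ)) by (eapply Permutation_in; [exact H1|];
        eapply Permutation_in; [apply Permutation_sym, H2| left; auto]).
    apply in_app_or in H; tauto. }
  destruct (perm_in_split F Γ H) as [Γ0 HΓ]. exists Γ0. split; auto. solve_perm.
Qed.

Ltac agr Hag l := rewrite (agree_sub _ _ l _ Hag) by solve_incl.
Ltac agrin Hag l H := rewrite (agree_sub _ _ l _ Hag) in H by solve_incl.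

Lemma inv_Rall s : forall H K, gd s H K -> forall σ a A D0, Permutation K (LAll a A :: D0) ->
  forall y, gd s (LIn y (snl σ a) :: map (sf σ) H) (LW y A :: map (sf σ) D0).
Proof.
  induction 1 as [r Γ Δ G D Hi HG HD Hf Hp IH]. intros σ a A D0 HP y.
  destruct (in_dec lform_eq_dec (LAll a A) (ps r)) as [Hin|Hnin].
  - destruct Hi; simpl in Hin; try (intuition discriminate).
    destruct Hin as [E|[]]. injection E as -> ->. simpl in *.
    pose proof (SW s _ _ (Hp _ _ (or_introl eq_refl)) (upd_w σ x y) [] []) as H1.
    assert (Ea : sf (upd_w σ x y) (LAll a A) = sf σ (LAll a A)) by (apply agree_w; apply Hf; simpl; auto).
    simpl in Ea. injection Ea as Ea.
    assert (Hag : forall F, In F (Γ ++ Δ) -> sf (upd_w σ x y) F = sf σ F)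
      by (intros F HF; apply agree_w; apply Hf; simpl; auto).
    simpl in H1. rewrite Ea in H1. agrin Hag Γ H1. agrin Hag Δ H1.
    destruct Nat.eq_dec; [|congruence].
    assert (Permutation D0 Δ) by (apply Permutation_cons_inv with (LAll a A);
      eapply Permutation_trans; [apply Permutation_sym, HP| exact HD]).
    apply (Permutation_map (sf σ)) in HG. apply (Permutation_map (sf σ)) in H.
    eapply gd_perm; [exact H1| |]; solve_perm.
  - destruct (in_nonprinc _ _ _ _ _ HD HP Hnin) as [Δ0 [HΔ HD0]].
    assert (Hi0 : incl Δ0 Δ) by (intros z Hz; eapply Permutation_in; [apply Permutation_sym, HΔ|right; auto]).
    assert (HinD : In (LAll a A) Δ) by (eapply Permutation_in; [apply Permutation_sym, HΔ|left; auto]).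
    destruct (eigen_rename s r Γ Δ σ [LIn y (snl σ a); LW y A] Hi Hf) as [σ' [Hi' [Hag Hf']]].
    assert (Ea : sf σ' (LAll a A) = sf σ (LAll a A)) by (apply Hag; rewrite !in_app_iff; auto).
    simpl in Ea. injection Ea as Ea.
    apply gd_r with (sr σ' r) (LIn y (snl σ a) :: map (sf σ) Γ) (LW y A :: map (sf σ) Δ0); auto.
    + simpl. agr Hag (pa r). apply (Permutation_map (sf σ)) in HG. rewrite map_app in HG. solve_perm.
    + simpl. agr Hag (ps r). apply (Permutation_map (sf σ)) in HD0. rewrite map_app in HD0. solve_perm.
    + eapply freshfor_incl; [|exact Hf']. simpl. agr Hag (pa r). agr Hag (ps r). rewrite !map_app.
      assert (incl (map (sf σ) Δ0) (map (sf σ) Δ)) by (apply incl_map; auto).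
      solve_incl.
    + intros Q' R' Hin. apply in_prs_sr in Hin as [Q [R [Hin [-> ->]]]].
      assert (HP' : Permutation (R ++ Δ) (LAll a A :: R ++ Δ0)) by solve_perm.
      specialize (IH Q R Hin σ' a A (R ++ Δ0) HP' y). rewrite Ea, !map_app in IH.
      agrin Hag Γ IH. agrin Hag Δ0 IH.
      eapply gd_perm; [exact IH| |]; solve_perm.
Qed.

Lemma contr_in (F : lform) P Full : contr P Full -> In F P -> In F Full.
Proof.
  intros [_ [R HP]] H. eapply Permutation_in; [apply Permutation_sym, HP|].
  apply in_or_app; auto.
Qed.

Lemma inv_Lex s : forall H K, gd s H K -> forall σ a A G0, Permutation H (LEx a A :: G0) ->
  forall y, gd s (LIn y (snl σ a) :: LW y A :: map (sf σ) G0) (map (sf σ) K).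
Proof.
  induction 1 as [r Γ Δ G D Hi HG HD Hf Hp IH]. intros σ a A G0 HP y.
  destruct (in_dec lform_eq_dec (LEx a A) (pa r)) as [Hin|Hnin].
  - destruct Hi; simpl in Hin; try (intuition discriminate);
    try (match goal with H : contr _ _ |- _ => apply (contr_in _ _ _ H) in Hin end;
         simpl in Hin; intuition discriminate);
    try (match goal with t : attmpl |- _ => destruct t end; simpl in Hin; intuition discriminate).
    destruct Hin as [E|[]]. injection E as -> ->. simpl in *.
    pose proof (SW s _ _ (Hp _ _ (or_introl eq_refl)) (upd_w σ x y) [] []) as H1.
    assert (Ea : sf (upd_w σ x y) (LEx a A) = sf σ (LEx a A)) by (apply agree_w; apply Hf; simpl; auto).
    simpl in Ea. injection Ea as Ea.
    assert (Hag : forall F, In F (Γ ++ Δ) -> sf (upd_w σ x y) F = sf σ F)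
      by (intros F HF; apply agree_w; apply Hf; simpl; auto).
    simpl in H1. rewrite Ea in H1. agrin Hag Γ H1. agrin Hag Δ H1.
    destruct Nat.eq_dec; [|congruence].
    assert (Permutation G0 Γ) by (apply Permutation_cons_inv with (LEx a A);
      eapply Permutation_trans; [apply Permutation_sym, HP| exact HG]).
    apply (Permutation_map (sf σ)) in HD. apply (Permutation_map (sf σ)) in H.
    eapply gd_perm; [exact H1| |]; solve_perm.
  - destruct (in_nonprinc _ _ _ _ _ HG HP Hnin) as [Γ0 [HΓ HG0]].
    assert (Hi0 : incl Γ0 Γ) by (intros z Hz; eapply Permutation_in; [apply Permutation_sym, HΓ|right; auto]).
    assert (HinD : In (LEx a A) Γ) by (eapply Permutation_in; [apply Permutation_sym, HΓ|left; auto]).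
    destruct (eigen_rename s r Γ Δ σ [LIn y (snl σ a); LW y A] Hi Hf) as [σ' [Hi' [Hag Hf']]].
    assert (Ea : sf σ' (LEx a A) = sf σ (LEx a A)) by (apply Hag; rewrite !in_app_iff; auto).
    simpl in Ea. injection Ea as Ea.
    apply gd_r with (sr σ' r) (LIn y (snl σ a) :: LW y A :: map (sf σ) Γ0) (map (sf σ) Δ); auto.
    + simpl. agr Hag (pa r). apply (Permutation_map (sf σ)) in HG0. rewrite map_app in HG0. solve_perm.
    + simpl. agr Hag (ps r). apply (Permutation_map (sf σ)) in HD. rewrite map_app in HD. solve_perm.
    + eapply freshfor_incl; [|exact Hf']. simpl. agr Hag (pa r). agr Hag (ps r). rewrite !map_app.
      assert (incl (map (sf σ) Γ0) (map (sf σ) Γ)) by (apply incl_map; auto).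
      solve_incl.
    + intros Q' R' Hin. apply in_prs_sr in Hin as [Q [R [Hin [-> ->]]]].
      assert (HP' : Permutation (Q ++ Γ) (LEx a A :: Q ++ Γ0)) by solve_perm.
      specialize (IH Q R Hin σ' a A (Q ++ Γ0) HP' y). rewrite Ea, !map_app in IH.
      agrin Hag Γ0 IH. agrin Hag Δ IH.
      eapply gd_perm; [exact IH| |]; solve_perm.
Qed.

Lemma inv_Rcond s : forall H K, gd s H K -> forall σ x A B D0, Permutation K (LW x (Cond A B) :: D0) ->
  forall b, gd s (LN b (sw σ x) :: LEx b A :: map (sf σ) H) (LCond (sw σ x) b A B :: map (sf σ) D0).
Proof.
  induction 1 as [r Γ Δ G D Hi HG HD Hf Hp IH]. intros σ x A B D0 HP b.
  destruct (in_dec lform_eq_dec (LW x (Cond A B)) (ps r)) as [Hin|Hnin].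
  - destruct Hi; simpl in Hin; try (intuition discriminate).
    destruct Hin as [E|[]]. injection E as -> -> ->. simpl in *.
    pose proof (SW s _ _ (Hp _ _ (or_introl eq_refl)) (upd_n σ n b) [] []) as H1.
    assert (Hag : forall F, In F (Γ ++ Δ) -> sf (upd_n σ n b) F = sf σ F)
      by (intros F HF; apply agree_n; apply Hf; simpl; auto).
    simpl in H1. agrin Hag Γ H1. agrin Hag Δ H1.
    destruct Nat.eq_dec; [|congruence].
    assert (Permutation D0 Δ) by (apply Permutation_cons_inv with (LW x (Cond A B));
      eapply Permutation_trans; [apply Permutation_sym, HP| exact HD]).
    apply (Permutation_map (sf σ)) in HG. apply (Permutation_map (sf σ)) in H.
    eapply gd_perm; [exact H1| |]; solve_perm.
  - destruct (in_nonprinc _ _ _ _ _ HD HP Hnin) as [Δ0 [HΔ HD0]].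
    assert (Hi0 : incl Δ0 Δ) by (intros z Hz; eapply Permutation_in; [apply Permutation_sym, HΔ|right; auto]).
    assert (HinD : In (LW x (Cond A B)) Δ) by (eapply Permutation_in; [apply Permutation_sym, HΔ|left; auto]).
    destruct (eigen_rename s r Γ Δ σ [LN b (sw σ x); LEx b A; LCond (sw σ x) b A B] Hi Hf) as [σ' [Hi' [Hag Hf']]].
    assert (Ea : sf σ' (LW x (Cond A B)) = sf σ (LW x (Cond A B))) by (apply Hag; rewrite !in_app_iff; auto).
    simpl in Ea. injection Ea as Ea.
    apply gd_r with (sr σ' r) (LN b (sw σ x) :: LEx b A :: map (sf σ) Γ) (LCond (sw σ x) b A B :: map (sf σ) Δ0); auto.
    + simpl. agr Hag (pa r). apply (Permutation_map (sf σ)) in HG. rewrite map_app in HG. solve_perm.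
    + simpl. agr Hag (ps r). apply (Permutation_map (sf σ)) in HD0. rewrite map_app in HD0. solve_perm.
    + eapply freshfor_incl; [|exact Hf']. simpl. agr Hag (pa r). agr Hag (ps r). rewrite !map_app.
      assert (incl (map (sf σ) Δ0) (map (sf σ) Δ)) by (apply incl_map; auto).
      solve_incl.
    + intros Q' R' Hin. apply in_prs_sr in Hin as [Q [R [Hin [-> ->]]]].
      assert (HP' : Permutation (R ++ Δ) (LW x (Cond A B) :: R ++ Δ0)) by solve_perm.
      specialize (IH Q R Hin σ' x A B (R ++ Δ0) HP' b). rewrite Ea, !map_app in IH.
      agrin Hag Γ IH. agrin Hag Δ0 IH.
      eapply gd_perm; [exact IH| |]; solve_perm.
Qed.

Lemma inv_Lbar s : forall H K, gd s H K -> forall σ x a A B G0, Permutation H (LCond x a A B :: G0) ->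
  forall c, gd s (LN c (sw σ x) :: LSub c (snl σ a) :: LEx c A :: LAll c (Imp A B) :: map (sf σ) G0)
                 (map (sf σ) K).
Proof.
  induction 1 as [r Γ Δ G D Hi HG HD Hf Hp IH]. intros σ x a A B G0 HP c.
  destruct (in_dec lform_eq_dec (LCond x a A B) (pa r)) as [Hin|Hnin].
  - destruct Hi; simpl in Hin; try (intuition discriminate);
    try (match goal with H : contr _ _ |- _ => apply (contr_in _ _ _ H) in Hin end;
         simpl in Hin; intuition discriminate);
    try (match goal with t : attmpl |- _ => destruct t end; simpl in Hin; intuition discriminate).
    destruct Hin as [E|[]]. injection E as -> -> -> ->. simpl in *.
    pose proof (SW s _ _ (Hp _ _ (or_introl eq_refl)) (upd_n σ n c) [] []) as H1.
    assert (Ea : sf (upd_n σ n c) (LCond x a A B) = sf σ (LCond x a A B)) by (apply agree_n; apply Hf; simpl; auto).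
    simpl in Ea. injection Ea as Ea.
    assert (Hag : forall F, In F (Γ ++ Δ) -> sf (upd_n σ n c) F = sf σ F)
      by (intros F HF; apply agree_n; apply Hf; simpl; auto).
    simpl in H1. rewrite Ea in H1. agrin Hag Γ H1. agrin Hag Δ H1.
    destruct Nat.eq_dec; [|congruence].
    assert (Permutation G0 Γ) by (apply Permutation_cons_inv with (LCond x a A B);
      eapply Permutation_trans; [apply Permutation_sym, HP| exact HG]).
    apply (Permutation_map (sf σ)) in HD. apply (Permutation_map (sf σ)) in H.
    eapply gd_perm; [exact H1| |]; solve_perm.
  - destruct (in_nonprinc _ _ _ _ _ HG HP Hnin) as [Γ0 [HΓ HG0]].
    assert (Hi0 : incl Γ0 Γ) by (intros z Hz; eapply Permutation_in; [apply Permutation_sym, HΓ|right; auto]).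
    assert (HinD : In (LCond x a A B) Γ) by (eapply Permutation_in; [apply Permutation_sym, HΓ|left; auto]).
    destruct (eigen_rename s r Γ Δ σ [LN c (sw σ x); LSub c (snl σ a); LEx c A; LAll c (Imp A B)] Hi Hf)
      as [σ' [Hi' [Hag Hf']]].
    assert (Ea : sf σ' (LCond x a A B) = sf σ (LCond x a A B)) by (apply Hag; rewrite !in_app_iff; auto).
    simpl in Ea. injection Ea as Ea1 Ea2.
    apply gd_r with (sr σ' r) (LN c (sw σ x) :: LSub c (snl σ a) :: LEx c A :: LAll c (Imp A B) :: map (sf σ) Γ0)
      (map (sf σ) Δ); auto.
    + simpl. agr Hag (pa r). apply (Permutation_map (sf σ)) in HG0. rewrite map_app in HG0. solve_perm.
    + simpl. agr Hag (ps r). apply (Permutation_map (sf σ)) in HD. rewrite map_app in HD. solve_perm.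
    + eapply freshfor_incl; [|exact Hf']. simpl. agr Hag (pa r). agr Hag (ps r). rewrite !map_app.
      assert (incl (map (sf σ) Γ0) (map (sf σ) Γ)) by (apply incl_map; auto).
      solve_incl.
    + intros Q' R' Hin. apply in_prs_sr in Hin as [Q [R [Hin [-> ->]]]].
      assert (HP' : Permutation (Q ++ Γ) (LCond x a A B :: Q ++ Γ0)) by solve_perm.
      specialize (IH Q R Hin σ' x a A B (Q ++ Γ0) HP' c). rewrite Ea1, Ea2, !map_app in IH.
      agrin Hag Γ0 IH. agrin Hag Δ IH.
      eapply gd_perm; [exact IH| |]; solve_perm.
Qed.

Ltac hpr := intros r Hi Hin; destruct Hi; simpl in Hin; try (intuition discriminate);
    try (match goal with H : contr _ _ |- _ => apply (contr_in _ _ _ H) in Hin end;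
         simpl in Hin; intuition discriminate);
    try (match goal with t : attmpl |- _ => destruct t end; simpl in Hin; intuition discriminate);
    destruct Hin as [E|[]]; injection E; intros; subst; simpl; auto 6.

Ltac hlab := intros e He; destruct e; simpl in *; auto; unfold wfresh, nfresh in *;
  let G := fresh in let HG := fresh in intros G HG;
  specialize (He _ (or_introl eq_refl)); simpl in HG;
  repeat match goal with H : _ \/ _ |- _ => destruct H end; try contradiction; subst; simpl in *; auto.

Lemma inv_Land s x A B G D : gd s (LW x (And A B) :: G) D -> gd s (LW x A :: LW x B :: G) D.
Proof.
  intros H. apply (invL s (LW x (And A B)) [LW x A; LW x B] [] ltac:(hpr) ltac:(hlab) _ _ H G).
  apply Permutation_refl.
Qed.
Lemma inv_Lor1 s x A B G D : gd s (LW x (Or A B) :: G) D -> gd s (LW x A :: G) D.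
Proof.
  intros H. apply (invL s (LW x (Or A B)) [LW x A] [] ltac:(hpr) ltac:(hlab) _ _ H G).
  apply Permutation_refl.
Qed.
Lemma inv_Lor2 s x A B G D : gd s (LW x (Or A B) :: G) D -> gd s (LW x B :: G) D.
Proof.
  intros H. apply (invL s (LW x (Or A B)) [LW x B] [] ltac:(hpr) ltac:(hlab) _ _ H G).
  apply Permutation_refl.
Qed.
Lemma inv_Limp1 s x A B G D : gd s (LW x (Imp A B) :: G) D -> gd s G (LW x A :: D).
Proof.
  intros H. apply (invL s (LW x (Imp A B)) [] [LW x A] ltac:(hpr) ltac:(hlab) _ _ H G).
  apply Permutation_refl.
Qed.
Lemma inv_Limp2 s x A B G D : gd s (LW x (Imp A B) :: G) D -> gd s (LW x B :: G) D.
Proof.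
  intros H. apply (invL s (LW x (Imp A B)) [LW x B] [] ltac:(hpr) ltac:(hlab) _ _ H G).
  apply Permutation_refl.
Qed.
Lemma inv_Rand1 s x A B G D : gd s G (LW x (And A B) :: D) -> gd s G (LW x A :: D).
Proof.
  intros H. apply (invR s (LW x (And A B)) [] [LW x A] ltac:(hpr) ltac:(hlab) _ _ H D).
  apply Permutation_refl.
Qed.
Lemma inv_Rand2 s x A B G D : gd s G (LW x (And A B) :: D) -> gd s G (LW x B :: D).
Proof.
  intros H. apply (invR s (LW x (And A B)) [] [LW x B] ltac:(hpr) ltac:(hlab) _ _ H D).
  apply Permutation_refl.
Qed.
Lemma inv_Ror s x A B G D : gd s G (LW x (Or A B) :: D) -> gd s G (LW x A :: LW x B :: D).
Proof.
  intros H. apply (invR s (LW x (Or A B)) [] [LW x A; LW x B] ltac:(hpr) ltac:(hlab) _ _ H D).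
  apply Permutation_refl.
Qed.
Lemma inv_Rimp s x A B G D : gd s G (LW x (Imp A B) :: D) -> gd s (LW x A :: G) (LW x B :: D).
Proof.
  intros H. apply (invR s (LW x (Imp A B)) [LW x A] [LW x B] ltac:(hpr) ltac:(hlab) _ _ H D).
  apply Permutation_refl.
Qed.

Definition inertR (F : lform) : Prop :=
  match F with LN _ _ | LIn _ _ | LSub _ _ => True | LW _ Bot => True | _ => False end.

Lemma strengthen s F G D : inertR F -> gd s G (F :: D) -> gd s G D.
Proof.
  intros HF H. apply (invR s F [] [] ltac:(intros r Hi Hin; destruct F as [| | |? [] | | |];
    simpl in HF; try contradiction; destruct Hi; simpl in Hin; intuition discriminate)
    ltac:(intros e _; destruct e; simpl; auto; intros ? []) _ _ H D).
  apply Permutation_refl.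
Qed.

Lemma inv_Rall' s G a A D y : gd s G (LAll a A :: D) -> gd s (LIn y a :: G) (LW y A :: D).
Proof.
  intros H. pose proof (inv_Rall s _ _ H sid a A D (Permutation_refl _) y) as H'.
  rewrite !map_sid in H'. replace (snl sid a) with a in H' by (destruct a; reflexivity). exact H'.
Qed.
Lemma inv_Lex' s G a A D y : gd s (LEx a A :: G) D -> gd s (LIn y a :: LW y A :: G) D.
Proof.
  intros H. pose proof (inv_Lex s _ _ H sid a A G (Permutation_refl _) y) as H'.
  rewrite !map_sid in H'. replace (snl sid a) with a in H' by (destruct a; reflexivity). exact H'.
Qed.
Lemma inv_Rcond' s G x A B D b : gd s G (LW x (Cond A B) :: D) ->
  gd s (LN b x :: LEx b A :: G) (LCond x b A B :: D).
Proof.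
  intros H. pose proof (inv_Rcond s _ _ H sid x A B D (Permutation_refl _) b) as H'.
  rewrite !map_sid in H'. exact H'.
Qed.
Lemma inv_Lbar' s G x a A B D c : gd s (LCond x a A B :: G) D ->
  gd s (LN c x :: LSub c a :: LEx c A :: LAll c (Imp A B) :: G) D.
Proof.
  intros H. pose proof (inv_Lbar s _ _ H sid x a A B G (Permutation_refl _) c) as H'.
  rewrite !map_sid in H'. replace (snl sid a) with a in H' by (destruct a; reflexivity). exact H'.
Qed.

Notation cc l x := (count_occ lform_eq_dec l x).

Ltac cnt_core e :=
  repeat match goal with
  | H : Permutation _ _ |- _ => pose proof (proj1 (Permutation_count_occ lform_eq_dec _ _) H e); clear H
  end;
  repeat match goal with
  | H : forall x, x <> ?F -> _ |- _ =>
      let Hn := fresh in destruct (lform_eq_dec e F) as [Hn|Hn];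
      [ clear H; try subst e | specialize (H e Hn) ]
  end;
  repeat match goal with
  | H : ?a <> ?b -> _ |- _ =>
      let Hn := fresh in destruct (lform_eq_dec a b) as [Hn|Hn];
      [ clear H | specialize (H Hn) ]
  end;
  repeat match goal with
  | H : forall x, count_occ _ _ x = _ |- _ => specialize (H e)
  | H : forall x, count_occ _ _ x <= _ |- _ => specialize (H e)
  end;
  repeat match goal with H : context [count_occ _ _ _] |- _ => revert H end;
  repeat progress (rewrite ?app_nil_r, ?map_app, ?count_occ_app, ?count_rep; simpl);
  repeat (match goal with |- context [lform_eq_dec ?a ?b] => destruct (lform_eq_dec a b) end;
          try subst; try discriminate; try congruence);
  intros; try congruence; lia.

Ltac cnt := match goal with
  | |- Permutation _ _ => apply (Permutation_count_occ lform_eq_dec);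
       let xx := fresh "xx" in intro xx; cnt_core xx
  | |- forall x, x <> _ -> _ => let xx := fresh "xx" in let Hn := fresh in intros xx Hn; cnt_core xx
  | |- forall x, _ => let xx := fresh "xx" in intro xx; cnt_core xx
  end.

Lemma perm_sub (P l : list lform) : (forall x, cc P x <= cc l x) -> exists l', Permutation l (P ++ l').
Proof.
  revert l. induction P as [|a P IHP]; intros l H.
  - exists l; auto.
  - assert (Ha : In a l). { apply (count_occ_In lform_eq_dec). specialize (H a). simpl in H.
      destruct (lform_eq_dec a a); [lia|congruence]. }
    destruct (perm_in_split a l Ha) as [l1 Hl1].
    destruct (IHP l1) as [l' Hl'].
    { intros x. specialize (H x). pose proof (proj1 (Permutation_count_occ lform_eq_dec _ _) Hl1 x).
      simpl in *. destruct (lform_eq_dec a x); lia. }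
    exists l'. eapply Permutation_trans; [exact Hl1|]. simpl. constructor. exact Hl'.
Qed.

Lemma count_incl (l1 l2 : list lform) : (forall x, cc l1 x <= cc l2 x) -> incl l1 l2.
Proof.
  intros H z Hz. apply (count_occ_In lform_eq_dec). apply (count_occ_In lform_eq_dec) in Hz.
  specialize (H z). lia.
Qed.


Lemma hasC_N s : hasC s = true -> hasN s = true.
Proof. destruct s; simpl; congruence. Qed.

Lemma single_elim s x G D : hasC s = true -> gd s (LIn x (NS x) :: G) D -> gd s G D.
Proof.
  intros HC H. set (n := fresh_n (LIn x (NS x) :: G ++ D)).
  assert (Hn : nfresh n (LIn x (NS x) :: G ++ D)) by apply fresh_n_ok.
  apply gd_r with (mkR [] [] [([LN (NV n) x], [])] (EN n)) G D.
  - apply i_N. apply hasC_N; auto.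
  - apply Permutation_refl.
  - apply Permutation_refl.
  - simpl. eapply nfresh_incl; [|exact Hn]. solve_incl.
  - intros Q R Hin. prem_cases Hin. simpl.
    apply gd_r with (mkR [LN (NV n) x] [] [([LN (NS x) x; LSub (NS x) (NV n); LN (NV n) x], [])] ENone) G D.
    + apply i_C; auto.
    + apply Permutation_refl.
    + apply Permutation_refl.
    + exact I.
    + intros Q R Hin. prem_cases Hin. simpl.
      apply gd_r with (mkR [LN (NS x) x] [] [([LIn x (NS x); LN (NS x) x], [])] ENone)
        (LSub (NS x) (NV n) :: LN (NV n) x :: G) D.
      * apply i_Single; auto.
      * apply Permutation_refl.
      * apply Permutation_refl.
      * exact I.
      * intros Q R Hin. prem_cases Hin. simpl.
        eapply gd_perm; [apply (weak s _ _ [LN (NS x) x; LSub (NS x) (NV n); LN (NV n) x] [] H)| |]; cnt.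
Qed.

Fixpoint fs (A : form) : nat :=
  match A with
  | Atom _ | Bot => 1
  | And A B | Or A B | Imp A B => fs A + fs B + 1
  | Cond A B => fs A + fs B + 2
  end.
Definition wt (F : lform) : nat :=
  match F with
  | LN _ _ | LIn _ _ | LSub _ _ => 0
  | LW _ A => 3 * fs A
  | LEx _ A | LAll _ A => 3 * fs A + 1
  | LCond _ _ A B => 3 * (fs A + fs B) + 5
  end.

Definition keepsL (r : rl) := forall Q R, In (Q, R) (prs r) -> forall x, cc (pa r) x <= cc Q x.
Definition keepsR (r : rl) := forall Q R, In (Q, R) (prs r) -> forall x, cc (ps r) x <= cc R x.
Definition remL s (r : rl) := exists F0, pa r = [F0] /\ ps r = [] /\
  forall Q R, In (Q, R) (prs r) ->
    (forall X Y, gd s (F0 :: X) Y -> gd s (Q ++ X) (R ++ Y)) /\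
    (forall F', In F' (Q ++ R) -> wt F' < wt F0).
Definition remR s (r : rl) := exists F0, ps r = [F0] /\ pa r = [] /\
  forall Q R, In (Q, R) (prs r) ->
    (forall X Y, gd s X (F0 :: Y) -> gd s (Q ++ X) (R ++ Y)) /\
    (forall F', In F' (Q ++ R) -> wt F' < wt F0).

Ltac wtac := let F' := fresh in let HF := fresh in intros F' HF; simpl in HF;
  repeat match goal with H : _ \/ _ |- _ => destruct H end; try contradiction; subst; simpl; lia.

Lemma classL s r : inst s r -> keepsL r \/ remL s r.
Proof.
  intros Hi; destruct Hi;
  try (left; intros Q R Hin; prem_cases Hin; cnt).
  - right. exists (LW x (And A B)). split; [reflexivity|split; [reflexivity|]].
    intros Q R Hin; prem_cases Hin; split; [intros X Y HX; apply inv_Land; auto | wtac].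
  - right. exists (LW x (Or A B)). split; [reflexivity|split; [reflexivity|]].
    intros Q R Hin; prem_cases Hin; (split; [intros X Y HX | wtac]).
    + apply (inv_Lor1 s x A B); auto.
    + apply (inv_Lor2 s x A B); auto.
  - right. exists (LW x (Imp A B)). split; [reflexivity|split; [reflexivity|]].
    intros Q R Hin; prem_cases Hin; (split; [intros X Y HX | wtac]).
    + apply (inv_Limp1 s x A B); auto.
    + apply (inv_Limp2 s x A B); auto.
  - right. exists (LEx a A). split; [reflexivity|split; [reflexivity|]].
    intros Q R Hin; prem_cases Hin; (split; [intros X Y HX | wtac]).
    apply inv_Lex'; auto.
  - right. exists (LCond x a A B). split; [reflexivity|split; [reflexivity|]].
    intros Q R Hin; prem_cases Hin; (split; [intros X Y HX | wtac]).
    apply inv_Lbar'; auto.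
Qed.

Lemma classR s r : inst s r -> keepsR r \/ remR s r.
Proof.
  intros Hi; destruct Hi;
  try (left; intros Q R Hin; prem_cases Hin; cnt).
  - right. exists (LW x (And A B)). split; [reflexivity|split; [reflexivity|]].
    intros Q R Hin; prem_cases Hin; (split; [intros X Y HX | wtac]).
    + apply (inv_Rand1 s x A B); auto.
    + apply (inv_Rand2 s x A B); auto.
  - right. exists (LW x (Or A B)). split; [reflexivity|split; [reflexivity|]].
    intros Q R Hin; prem_cases Hin; (split; [intros X Y HX | wtac]).
    apply inv_Ror; auto.
  - right. exists (LW x (Imp A B)). split; [reflexivity|split; [reflexivity|]].
    intros Q R Hin; prem_cases Hin; (split; [intros X Y HX | wtac]).
    apply inv_Rimp; auto.
  - right. exists (LAll a A). split; [reflexivity|split; [reflexivity|]].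
    intros Q R Hin; prem_cases Hin; (split; [intros X Y HX | wtac]).
    apply inv_Rall'; auto.
  - right. exists (LW x (Cond A B)). split; [reflexivity|split; [reflexivity|]].
    intros Q R Hin; prem_cases Hin; (split; [intros X Y HX | wtac]).
    apply inv_Rcond'; auto.
Qed.

Definition S2 (r : rl) F := exists Q, prs r = [(Q, [])] /\
  (forall x, x <> F -> cc Q x = cc (pa r) x) /\ cc (pa r) F <= cc Q F.
Definition S3 s (r : rl) F := hasC s = true /\ exists w Q, LIn w (NS w) <> F /\ prs r = [(Q, [])] /\
  (forall x, x <> F -> x <> LIn w (NS w) -> cc Q x = cc (pa r) x) /\
  cc Q (LIn w (NS w)) = S (cc (pa r) (LIn w (NS w))) /\ cc (pa r) F <= cc Q F.
Definition S1 s (r : rl) F := exists r', inst s r' /\ ps r' = [] /\ eg r' = eg r /\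
  cc (pa r') F = 1 /\ (forall x, x <> F -> cc (pa r') x = cc (pa r) x) /\
  forall Q' R', In (Q', R') (prs r') -> exists Q, In (Q, R') (prs r) /\
    (forall x, x <> F -> cc Q' x = cc Q x) /\ 1 <= cc Q' F /\ cc Q' F + cc (pa r) F <= cc Q F + 1.

Lemma shrink_P (F : lform) P Full : contr P Full -> 2 <= cc P F ->
  exists P1, Permutation P (repeat F (cc P F) ++ P1) /\ cc P1 F = 0 /\ contr (F :: P1) Full.
Proof.
  intros [Hi [R HR]] H2.
  destruct (perm_sub (repeat F (cc P F)) P) as [P1 HP1].
  { intros x. rewrite count_rep. destruct (lform_eq_dec F x); subst; lia. }
  assert (HP1F : cc P1 F = 0).
  { pose proof (proj1 (Permutation_count_occ lform_eq_dec _ _) HP1 F) as E.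
    rewrite count_occ_app, count_rep in E. destruct (lform_eq_dec F F); [lia|congruence]. }
  exists P1. split; [exact HP1|split; [exact HP1F|split]].
  - intros z Hz. destruct (lform_eq_dec z F) as [->|Hne]; [left; auto|right].
    apply Hi in Hz. apply (Permutation_in _ HP1) in Hz. apply in_app_or in Hz as [Hz|Hz]; auto.
    apply repeat_spec in Hz. congruence.
  - exists (repeat F (pred (cc P F)) ++ R).
    assert (E : cc P F = S (pred (cc P F))) by lia.
    cnt.
Qed.


Ltac ccl := simpl; repeat (match goal with |- context[lform_eq_dec ?a ?b] => destruct (lform_eq_dec a b) end); try congruence; lia.

Ltac dsplit H := repeat (match type of H with context [lform_eq_dec ?a ?b] => destruct (lform_eq_dec a b) end).

Lemma shrinkL s r F : inst s r -> 2 <= cc (pa r) F -> ps r = [] /\ (S2 r F \/ S3 s r F \/ S1 s r F).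
Proof.
  intros Hi H2. destruct Hi; simpl in H2;
  try (repeat (match goal with H : context [lform_eq_dec ?a ?b] |- _ => destruct (lform_eq_dec a b) end;
               subst; try discriminate); lia).
  - (* Tr *) dsplit H2; try lia. subst F. injection e0; intros; subst.
    split; [reflexivity|left]. eexists.
    split; [reflexivity|split]; [cnt | simpl; ccl].
  - (* Repl1 *) destruct t; simpl in *; dsplit H2; try lia; subst F; try discriminate.
    all: injection e0; intros; subst; simpl.
    all: split; [reflexivity|left]; eexists; split; [reflexivity|split]; [cnt | ccl].
  - (* Repl2 *) destruct t; simpl in *; dsplit H2; try lia; subst F; try discriminate.
    all: injection e0; intros; subst; simpl.
    all: split; [reflexivity|].
    all: lazymatch goal with |- context [ [LIn ?u (NS ?v); LIn ?v (NS ?v); LIn ?u (NS ?v)] ] =>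
      destruct (Nat.eq_dec v u) as [<-|Hxy];
      [ left; eexists; split; [reflexivity|split]; [cnt | ccl]
      | right; left; split; [auto|]; exists v, [LIn u (NS v); LIn v (NS v); LIn u (NS v)];
        split; [intros E; injection E; auto|];
        split; [reflexivity|split; [|split]]; [cnt | ccl | ccl] ] end.
  - (* U1 *) split; [reflexivity|right; right].
    destruct (shrink_P F P _ ltac:(eassumption) H2) as [P1 [HP1 [HP1F Hc]]].
    exists (mkR (F :: P1) [] [(LIn z (NV n) :: LN (NV n) x :: F :: P1, [])] (EN n)).
    split; [eapply i_U1; eauto|]. split; [reflexivity|split; [reflexivity|split; [|split]]].
    + simpl. cnt_core F.
    + simpl. cnt.
    + intros Q' R' Hin. prem_cases Hin. exists (LIn z (NV n) :: LN (NV n) x :: P).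
      split; [left; reflexivity|]. simpl. split; [cnt|split; cnt_core F].
  - (* U2 *) split; [reflexivity|right; right].
    destruct (shrink_P F P _ ltac:(eassumption) H2) as [P1 [HP1 [HP1F Hc]]].
    exists (mkR (F :: P1) [] [(LIn z (NV n) :: LN (NV n) y :: F :: P1, [])] (EN n)).
    split; [eapply i_U2; eauto|]. split; [reflexivity|split; [reflexivity|split; [|split]]].
    + simpl. cnt_core F.
    + simpl. cnt.
    + intros Q' R' Hin. prem_cases Hin. exists (LIn z (NV n) :: LN (NV n) y :: P).
      split; [left; reflexivity|]. simpl. split; [cnt|split; cnt_core F].
  - (* A1 *) split; [reflexivity|right; right].
    destruct (shrink_P F P _ ltac:(eassumption) H2) as [P1 [HP1 [HP1F Hc]]].
    exists (mkR (F :: P1) [] [(LN b y :: F :: P1, [])] ENone).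
    split; [eapply i_A1; eauto|]. split; [reflexivity|split; [reflexivity|split; [|split]]].
    + simpl. cnt_core F.
    + simpl. cnt.
    + intros Q' R' Hin. prem_cases Hin. exists (LN b y :: P).
      split; [left; reflexivity|]. simpl. split; [cnt|split; cnt_core F].
  - (* A2 *) dsplit H2; try lia; subst F; try discriminate.
    all: match goal with E : LN _ _ = LN _ _ |- _ => injection E as -> -> end.
    all: split; [reflexivity|left]; eexists;
      split; [reflexivity|split]; [cnt | simpl; ccl].
Qed.

Definition ContL s F := forall H K, gd s H K -> forall G',
  (forall x, x <> F -> cc G' x = cc H x) -> 1 <= cc G' F -> cc G' F <= cc H F -> gd s G' K.
Definition ContR s F := forall H K, gd s H K -> forall D',
  (forall x, x <> F -> cc D' x = cc K x) -> 1 <= cc D' F -> cc D' F <= cc K F -> gd s H D'.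

Lemma dupL s L X Y : (forall F, In F L -> ContL s F) -> gd s (L ++ L ++ X) Y -> gd s (L ++ X) Y.
Proof.
  revert X. induction L as [|F L IHL]; intros X HL H; simpl in *; auto.
  assert (H1 : gd s (L ++ L ++ F :: X) Y).
  { apply (HL F (or_introl eq_refl) _ _ H); [cnt | cnt_core F | cnt_core F]. }
  apply IHL in H1; auto. eapply gd_perm; [exact H1| cnt | apply Permutation_refl].
Qed.
Lemma dupR s M X Y : (forall F, In F M -> ContR s F) -> gd s X (M ++ M ++ Y) -> gd s X (M ++ Y).
Proof.
  revert Y. induction M as [|F M IHM]; intros Y HM H; simpl in *; auto.
  assert (H1 : gd s X (M ++ M ++ F :: Y)).
  { apply (HM F (or_introl eq_refl) _ _ H); [cnt | cnt_core F | cnt_core F]. }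
  apply IHM in H1; auto. eapply gd_perm; [exact H1| apply Permutation_refl | cnt].
Qed.

Lemma ContL_step s F (HC : forall F', wt F' < wt F -> ContL s F' /\ ContR s F') : ContL s F.
Proof.
  intros H K Hd. induction Hd as [r Γ Δ G D Hi HG HD Hf Hp IH]. intros G' Hc1 Hc2 Hc3.
  destruct (Nat.eq_dec (cc G' F) (cc G F)) as [Heq|Hneq].
  { eapply gd_perm; [apply gd_r with r Γ Δ; eauto | | apply Permutation_refl]. cnt. }
  destruct (le_lt_dec (cc (pa r) F) (cc G' F)) as [Hm|Hm].
  - destruct (perm_sub (pa r) G') as [Γ' HΓ']. { cnt. }
    assert (HiΓ : incl Γ' Γ) by (apply count_incl; cnt).
    assert (Hf' : freshfor (eg r) (pa r ++ ps r ++ Γ' ++ Δ))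
      by (eapply freshfor_incl; [|exact Hf]; solve_incl).
    destruct (classL s r Hi) as [Hk|[F0 [Hpa [Hps Hinv]]]].
    + apply gd_r with r Γ' Δ; auto.
      intros Q R Hin. apply (IH Q R Hin (Q ++ Γ')); [cnt| |].
      * pose proof (Hk Q R Hin F). cnt_core F.
      * cnt_core F.
    + destruct (Nat.eq_dec (cc (pa r) F) 0) as [H0|H0].
      * apply gd_r with r Γ' Δ; auto.
        intros Q R Hin. apply (IH Q R Hin (Q ++ Γ')); [cnt| cnt_core F | cnt_core F].
      * assert (F0 = F). { rewrite Hpa in H0. simpl in H0. destruct (lform_eq_dec F0 F); auto; lia. }
        subst F0. apply gd_r with r Γ' Δ; auto.
        intros Q R Hin. destruct (Hinv Q R Hin) as [Hinv1 Hwt].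
        assert (H1 : gd s (F :: Q ++ Γ') (R ++ Δ)).
        { apply (IH Q R Hin); [cnt | cnt_core F | rewrite Hpa in *; cnt_core F]. }
        apply Hinv1 in H1.
        apply (dupL s Q (Γ') (R ++ Δ)).
        { intros F' HF'. apply HC, Hwt. apply in_or_app; auto. }
        eapply gd_perm; [apply (dupR s R (Q ++ Q ++ Γ') Δ)| apply Permutation_refl | apply Permutation_refl].
        { intros F' HF'. apply HC, Hwt. apply in_or_app; auto. }
        eapply gd_perm; [exact H1| cnt | cnt].
  - destruct (shrinkL s r F Hi ltac:(lia)) as [Hps [HS|[HS|HS]]].
    + destruct HS as [Q [Hprs [HQ1 HQ2]]].
      assert (Hin : In (Q, []) (prs r)) by (rewrite Hprs; left; auto).
      pose proof (IH Q [] Hin G' ltac:(cnt) Hc2 ltac:(cnt_core F)) as H1.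
      eapply gd_perm; [exact H1|apply Permutation_refl|]. rewrite Hps in HD. cnt.
    + destruct HS as [HC' [w [Q [Hw [Hprs [HQ1 [HQ2 HQ3]]]]]]].
      assert (Hin : In (Q, []) (prs r)) by (rewrite Hprs; left; auto).
      pose proof (IH Q [] Hin (LIn w (NS w) :: G') ltac:(cnt) ltac:(cnt_core F) ltac:(cnt_core F)) as H1.
      apply single_elim in H1; auto.
      eapply gd_perm; [exact H1|apply Permutation_refl|]. rewrite Hps in HD. cnt.
    + destruct HS as [r' [Hi' [Hps' [Heg [Hc1' [Hc2' Hpr']]]]]].
      destruct (perm_sub (pa r') G') as [Γ' HΓ']. { cnt. }
      apply gd_r with r' Γ' Δ; auto.
      * rewrite Hps'. rewrite Hps in HD. exact HD.
      * rewrite Heg. eapply freshfor_incl; [|exact Hf]. rewrite Hps', Hps.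
        intros z Hz. destruct (lform_eq_dec z F) as [->|Hne].
        -- apply in_or_app. left. apply (count_occ_In lform_eq_dec). lia.
        -- apply (count_occ_In lform_eq_dec). apply (count_occ_In lform_eq_dec) in Hz.
           revert Hz. cnt_core z.
      * intros Q' R' Hin'. destruct (Hpr' Q' R' Hin') as [Q [HinQ [HQ1 [HQ2 HQ3]]]].
        apply (IH Q R' HinQ (Q' ++ Γ')); [cnt | cnt_core F | cnt_core F].
Qed.

Lemma ps_len s r : inst s r -> length (ps r) <= 1.
Proof. intros Hi; destruct Hi; simpl; lia. Qed.

Lemma cc_len (l : list lform) x : cc l x <= length l.
Proof. induction l; simpl; auto. destruct (lform_eq_dec a x); lia. Qed.

Lemma ContR_step s F (HC : forall F', wt F' < wt F -> ContL s F' /\ ContR s F') : ContR s F.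
Proof.
  intros H K Hd. induction Hd as [r Γ Δ G D Hi HG HD Hf Hp IH]. intros D' Hc1 Hc2 Hc3.
  destruct (Nat.eq_dec (cc D' F) (cc D F)) as [Heq|Hneq].
  { eapply gd_perm; [apply gd_r with r Γ Δ; eauto | apply Permutation_refl | ]. cnt. }
  assert (Hm : cc (ps r) F <= cc D' F) by (pose proof (ps_len s r Hi); pose proof (cc_len (ps r) F); lia).
  destruct (perm_sub (ps r) D') as [Δ' HΔ']. { cnt. }
  assert (HiΔ : incl Δ' Δ) by (apply count_incl; cnt).
  assert (Hf' : freshfor (eg r) (pa r ++ ps r ++ Γ ++ Δ'))
    by (eapply freshfor_incl; [|exact Hf]; solve_incl).
  destruct (classR s r Hi) as [Hk|[F0 [Hps [Hpa Hinv]]]].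
  - apply gd_r with r Γ Δ'; auto.
    intros Q R Hin. apply (IH Q R Hin (R ++ Δ')); [cnt| |].
    + pose proof (Hk Q R Hin F). cnt_core F.
    + cnt_core F.
  - destruct (Nat.eq_dec (cc (ps r) F) 0) as [H0|H0].
    + apply gd_r with r Γ Δ'; auto.
      intros Q R Hin. apply (IH Q R Hin (R ++ Δ')); [cnt| cnt_core F | cnt_core F].
    + assert (F0 = F). { rewrite Hps in H0. simpl in H0. destruct (lform_eq_dec F0 F); auto; lia. }
      subst F0. apply gd_r with r Γ Δ'; auto.
      intros Q R Hin. destruct (Hinv Q R Hin) as [Hinv1 Hwt].
      assert (H1 : gd s (Q ++ Γ) (F :: R ++ Δ')).
      { apply (IH Q R Hin); [cnt | cnt_core F | rewrite Hps in *; cnt_core F]. }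
      apply Hinv1 in H1.
      apply (dupL s Q Γ (R ++ Δ')).
      { intros F' HF'. apply HC, Hwt. apply in_or_app; auto. }
      apply (dupR s R (Q ++ Q ++ Γ) Δ').
      { intros F' HF'. apply HC, Hwt. apply in_or_app; auto. }
      eapply gd_perm; [exact H1| cnt | cnt].
Qed.

Lemma cont_all s : forall n F, wt F < n -> ContL s F /\ ContR s F.
Proof.
  induction n as [|n IHn]; intros F HF; [lia|].
  split; [apply ContL_step | apply ContR_step]; intros F' HF'; apply IHn; lia.
Qed.

Lemma contL s F : ContL s F.
Proof. apply (cont_all s (S (wt F))); lia. Qed.
Lemma contR s F : ContR s F.
Proof. apply (cont_all s (S (wt F))); lia. Qed.

Lemma contr_dup s L M X Y : gd s (L ++ L ++ X) (M ++ M ++ Y) -> gd s (L ++ X) (M ++ Y).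
Proof.
  intros H. apply dupL; [intros; apply contL|]. apply dupR; [intros; apply contR|]. exact H.
Qed.

Lemma contr_L1 s Y : forall L X X', gd s X Y -> (forall x, ~ In x L -> cc X x = cc X' x) ->
  (forall x, cc X' x <= cc X x) -> (forall x, 1 <= cc X x -> 1 <= cc X' x) -> gd s X' Y.
Proof.
  induction L as [|F L IHL]; intros X X' H H1 H2 H3.
  - eapply gd_perm; [exact H| |apply Permutation_refl].
    apply (Permutation_count_occ lform_eq_dec); intro x; apply H1; intros [].
  - destruct (perm_sub (repeat F (cc X F - cc X' F)) X) as [X1 HX1]. { cnt. }
    apply IHL with X1.
    + destruct (Nat.eq_dec (cc X F) (cc X' F)) as [E|E].
      * eapply gd_perm; [exact H| |apply Permutation_refl]. cnt.
      * apply (contL s F _ _ H); [cnt | |].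
        -- pose proof (H3 F). pose proof (H2 F). cnt_core F.
        -- pose proof (H2 F). cnt_core F.
    + intros x Hx. destruct (lform_eq_dec x F) as [->|Hne].
      * pose proof (H2 F). cnt_core F.
      * assert (~ In x (F :: L)) by (simpl; intuition). specialize (H1 x H0). cnt_core x.
    + intros x. pose proof (H2 x). cnt_core x.
    + intros x. pose proof (H3 x). pose proof (H2 x). cnt_core x.
Qed.
Lemma contr_R1 s X : forall L Y Y', gd s X Y -> (forall x, ~ In x L -> cc Y x = cc Y' x) ->
  (forall x, cc Y' x <= cc Y x) -> (forall x, 1 <= cc Y x -> 1 <= cc Y' x) -> gd s X Y'.
Proof.
  induction L as [|F L IHL]; intros Y Y' H H1 H2 H3.
  - eapply gd_perm; [exact H|apply Permutation_refl|].
    apply (Permutation_count_occ lform_eq_dec); intro x; apply H1; intros [].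
  - destruct (perm_sub (repeat F (cc Y F - cc Y' F)) Y) as [Y1 HY1]. { cnt. }
    apply IHL with Y1.
    + destruct (Nat.eq_dec (cc Y F) (cc Y' F)) as [E|E].
      * eapply gd_perm; [exact H|apply Permutation_refl|]. cnt.
      * apply (contR s F _ _ H); [cnt | |].
        -- pose proof (H3 F). pose proof (H2 F). cnt_core F.
        -- pose proof (H2 F). cnt_core F.
    + intros x Hx. destruct (lform_eq_dec x F) as [->|Hne].
      * pose proof (H2 F). cnt_core F.
      * assert (~ In x (F :: L)) by (simpl; intuition). specialize (H1 x H0). cnt_core x.
    + intros x. pose proof (H2 x). cnt_core x.
    + intros x. pose proof (H3 x). pose proof (H2 x). cnt_core x.
Qed.

Lemma contr_to s X Y X' Y' : gd s X Y ->
  (forall x, cc X' x <= cc X x) -> (forall x, 1 <= cc X x -> 1 <= cc X' x) ->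
  (forall x, cc Y' x <= cc Y x) -> (forall x, 1 <= cc Y x -> 1 <= cc Y' x) -> gd s X' Y'.
Proof.
  intros H H1 H2 H3 H4.
  apply (contr_R1 s X' Y Y Y'); auto.
  - apply (contr_L1 s Y X X X'); auto.
    intros x Hx. destruct (cc X x) eqn:E; [|exfalso; apply Hx, (count_occ_In lform_eq_dec); lia].
    specialize (H1 x). lia.
  - intros x Hx. destruct (cc Y x) eqn:E; [|exfalso; apply Hx, (count_occ_In lform_eq_dec); lia].
    specialize (H3 x). lia.
Qed.

Lemma ps_single s r F : inst s r -> In F (ps r) -> ps r = [F].
Proof. intros Hi H; destruct Hi; simpl in *; intuition congruence. Qed.

Lemma trackR s (Fc : lform) (G' D' : list lform)
  (Hprinc : forall r Γ Δ σ F0, inst s r -> ps r = [F0] -> sf σ F0 = Fc ->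
     freshfor (eg r) (pa r ++ ps r ++ Γ ++ Δ) ->
     (forall Q R, In (Q, R) (prs r) -> gd s (Q ++ Γ) (R ++ Δ)) ->
     (forall Q R, In (Q, R) (prs r) -> forall σ' D0, Permutation (R ++ Δ) (F0 :: D0) -> sf σ' F0 = Fc ->
         gd s (map (sf σ') (Q ++ Γ) ++ G') (map (sf σ') D0 ++ D')) ->
     gd s (map (sf σ) (pa r ++ Γ) ++ G') (map (sf σ) Δ ++ D')) :
  forall H K, gd s H K -> forall σ F0 D0, Permutation K (F0 :: D0) -> sf σ F0 = Fc ->
    gd s (map (sf σ) H ++ G') (map (sf σ) D0 ++ D').
Proof.
  induction 1 as [r Γ Δ G D Hi HG HD Hf Hp IH]. intros σ F0 D0 HP Hσ.
  destruct (in_dec lform_eq_dec F0 (ps r)) as [Hin|Hnin].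
  - pose proof (ps_single s r F0 Hi Hin) as E.
    pose proof (Hprinc r Γ Δ σ F0 Hi E Hσ Hf Hp (fun Q R Hin σ' D0 HP' Hs => IH Q R Hin σ' F0 D0 HP' Hs)) as H1.
    rewrite E in HD.
    assert (Permutation D0 Δ) by (apply Permutation_cons_inv with F0;
      eapply Permutation_trans; [apply Permutation_sym, HP| exact HD]).
    apply (Permutation_map (sf σ)) in HG. apply (Permutation_map (sf σ)) in H.
    eapply gd_perm; [exact H1| |]; cnt.
  - destruct (in_nonprinc _ _ _ _ _ HD HP Hnin) as [Δ0 [HΔ HD0]].
    assert (Hi0 : incl Δ0 Δ) by (intros z Hz; eapply Permutation_in; [apply Permutation_sym, HΔ|right; auto]).
    assert (HinD : In F0 Δ) by (eapply Permutation_in; [apply Permutation_sym, HΔ|left; auto]).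
    destruct (eigen_rename s r Γ Δ σ (G' ++ D') Hi Hf) as [σ' [Hi' [Hag Hf']]].
    assert (Ea : sf σ' F0 = sf σ F0) by (apply Hag; rewrite !in_app_iff; auto).
    apply gd_r with (sr σ' r) (map (sf σ) Γ ++ G') (map (sf σ) Δ0 ++ D'); auto.
    + simpl. agr Hag (pa r). apply (Permutation_map (sf σ)) in HG. rewrite map_app in HG. cnt.
    + simpl. agr Hag (ps r). apply (Permutation_map (sf σ)) in HD0. rewrite map_app in HD0. cnt.
    + eapply freshfor_incl; [|exact Hf']. simpl. agr Hag (pa r). agr Hag (ps r). rewrite !map_app.
      assert (incl (map (sf σ) Δ0) (map (sf σ) Δ)) by (apply incl_map; auto).
      solve_incl.
    + intros Q' R' Hin. apply in_prs_sr in Hin as [Q [R [Hin [-> ->]]]].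
      assert (HP' : Permutation (R ++ Δ) (F0 :: R ++ Δ0)) by cnt.
      specialize (IH Q R Hin σ' F0 (R ++ Δ0) HP' ltac:(congruence)). rewrite !map_app in IH.
      agrin Hag Γ IH. agrin Hag Δ0 IH.
      eapply gd_perm; [exact IH| |]; cnt.
Qed.

Lemma trackL s (Fc : lform) (G D : list lform)
  (Hprinc : forall r Γ Δ σ F0 P', inst s r -> Permutation (pa r) (F0 :: P') -> sf σ F0 = Fc ->
     freshfor (eg r) (pa r ++ ps r ++ Γ ++ Δ) ->
     (forall Q R, In (Q, R) (prs r) -> gd s (Q ++ Γ) (R ++ Δ)) ->
     (forall Q R, In (Q, R) (prs r) -> forall σ' G0, Permutation (Q ++ Γ) (F0 :: G0) -> sf σ' F0 = Fc ->
         gd s (G ++ map (sf σ') G0) (D ++ map (sf σ') (R ++ Δ))) ->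
     gd s (G ++ map (sf σ) (P' ++ Γ)) (D ++ map (sf σ) (ps r ++ Δ))) :
  forall H K, gd s H K -> forall σ F0 G0, Permutation H (F0 :: G0) -> sf σ F0 = Fc ->
    gd s (G ++ map (sf σ) G0) (D ++ map (sf σ) K).
Proof.
  induction 1 as [r Γ Δ G1 D1 Hi HG HD Hf Hp IH]. intros σ F0 G0 HP Hσ.
  destruct (in_dec lform_eq_dec F0 (pa r)) as [Hin|Hnin].
  - destruct (perm_in_split F0 (pa r) Hin) as [P' HP'].
    pose proof (Hprinc r Γ Δ σ F0 P' Hi HP' Hσ Hf Hp (fun Q R Hin σ' G0 HP' Hs => IH Q R Hin σ' F0 G0 HP' Hs)) as H1.
    assert (Permutation G0 (P' ++ Γ)) by cnt.
    apply (Permutation_map (sf σ)) in HD. apply (Permutation_map (sf σ)) in H.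
    eapply gd_perm; [exact H1| |]; cnt.
  - destruct (in_nonprinc _ _ _ _ _ HG HP Hnin) as [Γ0 [HΓ HG0]].
    assert (Hi0 : incl Γ0 Γ) by (intros z Hz; eapply Permutation_in; [apply Permutation_sym, HΓ|right; auto]).
    assert (HinD : In F0 Γ) by (eapply Permutation_in; [apply Permutation_sym, HΓ|left; auto]).
    destruct (eigen_rename s r Γ Δ σ (G ++ D) Hi Hf) as [σ' [Hi' [Hag Hf']]].
    assert (Ea : sf σ' F0 = sf σ F0) by (apply Hag; rewrite !in_app_iff; auto).
    apply gd_r with (sr σ' r) (G ++ map (sf σ) Γ0) (D ++ map (sf σ) Δ); auto.
    + simpl. agr Hag (pa r). apply (Permutation_map (sf σ)) in HG0. rewrite map_app in HG0. cnt.
    + simpl. agr Hag (ps r). apply (Permutation_map (sf σ)) in HD. rewrite map_app in HD. cnt.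
    + eapply freshfor_incl; [|exact Hf']. simpl. agr Hag (pa r). agr Hag (ps r). rewrite !map_app.
      assert (incl (map (sf σ) Γ0) (map (sf σ) Γ)) by (apply incl_map; auto).
      solve_incl.
    + intros Q' R' Hin. apply in_prs_sr in Hin as [Q [R [Hin [-> ->]]]].
      assert (HP' : Permutation (Q ++ Γ) (F0 :: Q ++ Γ0)) by cnt.
      specialize (IH Q R Hin σ' F0 (Q ++ Γ0) HP' ltac:(congruence)). rewrite !map_app in IH.
      agrin Hag Γ0 IH. agrin Hag Δ IH.
      eapply gd_perm; [exact IH| |]; cnt.
Qed.

Definition CutIH s F := forall F', wt F' < wt F -> forall G D G' D',
  gd s G (F' :: D) -> gd s (F' :: G') D' -> gd s (G ++ G') (D ++ D').

Lemma hand_cond s x A B G D (HL : gd s G (LW x (Cond A B) :: D)) (IH : CutIH s (LW x (Cond A B))) :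
  forall r Γ Δ σ F0 P', inst s r -> Permutation (pa r) (F0 :: P') -> sf σ F0 = LW x (Cond A B) ->
     freshfor (eg r) (pa r ++ ps r ++ Γ ++ Δ) ->
     (forall Q R, In (Q, R) (prs r) -> gd s (Q ++ Γ) (R ++ Δ)) ->
     (forall Q R, In (Q, R) (prs r) -> forall σ' G0, Permutation (Q ++ Γ) (F0 :: G0) -> sf σ' F0 = LW x (Cond A B) ->
         gd s (G ++ map (sf σ') G0) (D ++ map (sf σ') (R ++ Δ))) ->
     gd s (G ++ map (sf σ) (P' ++ Γ)) (D ++ map (sf σ) (ps r ++ Δ)).
Proof.
  intros r Γ Δ σ F0 P' Hi HP' Hσ Hf Hp IHp.
  assert (Hin : In F0 (pa r)) by (eapply Permutation_in; [apply Permutation_sym, HP'|left; auto]).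
  destruct Hi; simpl in Hin; try (intuition (subst; discriminate));
    try (match goal with H : contr _ _ |- _ => apply (contr_in _ _ _ H) in Hin end;
         simpl in Hin; intuition (subst; discriminate)).
  all: try (match goal with t : attmpl |- _ => destruct t end; simpl in Hin; intuition (subst; discriminate)).
  destruct Hin as [<-|[<-|[]]]; simpl in Hσ; [discriminate|].
  injection Hσ as E1 -> ->. simpl in *.
  set (b := snl σ a).
  assert (IH1 := IHp _ _ (or_introl eq_refl) σ (LN a x0 :: Γ) ltac:(cnt) ltac:(simpl; congruence)).
  assert (IH2 := IHp _ _ (or_intror (or_introl eq_refl)) σ (LCond x0 a A B :: LN a x0 :: Γ) ltac:(cnt)
     ltac:(simpl; congruence)).
  simpl in IH1, IH2. rewrite E1 in IH1, IH2. fold b in IH1, IH2.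
  pose proof (inv_Rcond' s G x A B D b HL) as Li.
  assert (C1 : gd s ((G ++ LN b x :: map (sf σ) Γ) ++ (LN b x :: G)) ((D ++ map (sf σ) Δ) ++ (LCond x b A B :: D))).
  { apply (IH (LEx b A)); [simpl; lia | eapply gd_perm; [exact IH1| cnt | cnt] | eapply gd_perm; [exact Li | cnt | cnt]]. }
  assert (C2 : gd s (((G ++ LN b x :: map (sf σ) Γ) ++ (LN b x :: G)) ++ (G ++ LN b x :: map (sf σ) Γ))
                    (((D ++ map (sf σ) Δ) ++ D) ++ (D ++ map (sf σ) Δ))).
  { apply (IH (LCond x b A B)); [simpl; lia | eapply gd_perm; [exact C1| cnt | cnt] |
      eapply gd_perm; [exact IH2| cnt | cnt]]. }
  assert (HP1 : Permutation P' [LN a x0]) by cnt.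
  apply (Permutation_map (sf σ)) in HP1. simpl in HP1. rewrite E1 in HP1. fold b in HP1.
  rewrite !map_app. simpl.
  apply (contr_to s _ _ _ _ C2); cnt.
Qed.

Ltac hstart Hin := try (intuition (subst; discriminate));
    try (match goal with H : contr _ _ |- _ => apply (contr_in _ _ _ H) in Hin end;
         simpl in Hin; intuition (subst; discriminate));
    try (match goal with t : attmpl |- _ => destruct t end; simpl in Hin; intuition (subst; discriminate)).

Lemma hand_all s a A G D (HL : gd s G (LAll a A :: D)) (IH : CutIH s (LAll a A)) :
  forall r Γ Δ σ F0 P', inst s r -> Permutation (pa r) (F0 :: P') -> sf σ F0 = LAll a A ->
     freshfor (eg r) (pa r ++ ps r ++ Γ ++ Δ) ->
     (forall Q R, In (Q, R) (prs r) -> gd s (Q ++ Γ) (R ++ Δ)) ->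
     (forall Q R, In (Q, R) (prs r) -> forall σ' G0, Permutation (Q ++ Γ) (F0 :: G0) -> sf σ' F0 = LAll a A ->
         gd s (G ++ map (sf σ') G0) (D ++ map (sf σ') (R ++ Δ))) ->
     gd s (G ++ map (sf σ) (P' ++ Γ)) (D ++ map (sf σ) (ps r ++ Δ)).
Proof.
  intros r Γ Δ σ F0 P' Hi HP' Hσ Hf Hp IHp.
  assert (Hin : In F0 (pa r)) by (eapply Permutation_in; [apply Permutation_sym, HP'|left; auto]).
  destruct Hi; simpl in Hin; hstart Hin.
  destruct Hin as [<-|[<-|[]]]; simpl in Hσ; [discriminate|].
  injection Hσ as E1 ->. simpl in *.
  set (y := sw σ x).
  assert (IH1 := IHp _ _ (or_introl eq_refl) σ (LW x A :: LIn x a0 :: Γ) ltac:(cnt) ltac:(simpl; congruence)).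
  simpl in IH1. rewrite E1 in IH1. fold y in IH1.
  pose proof (inv_Rall' s G a A D y HL) as Li.
  assert (C : gd s ((LIn y a :: G) ++ (G ++ LIn y a :: map (sf σ) Γ)) (D ++ (D ++ map (sf σ) Δ))).
  { apply (IH (LW y A)); [simpl; lia | exact Li | eapply gd_perm; [exact IH1| cnt | cnt]]. }
  assert (HP1 : Permutation P' [LIn x a0]) by cnt.
  apply (Permutation_map (sf σ)) in HP1. simpl in HP1. rewrite E1 in HP1. fold y in HP1.
  rewrite !map_app. simpl.
  apply (contr_to s _ _ _ _ C); cnt.
Qed.

Lemma hand_ex s a A G' D' (HR : gd s (LEx a A :: G') D') (IH : CutIH s (LEx a A)) :
  forall r Γ Δ σ F0, inst s r -> ps r = [F0] -> sf σ F0 = LEx a A ->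
     freshfor (eg r) (pa r ++ ps r ++ Γ ++ Δ) ->
     (forall Q R, In (Q, R) (prs r) -> gd s (Q ++ Γ) (R ++ Δ)) ->
     (forall Q R, In (Q, R) (prs r) -> forall σ' D0, Permutation (R ++ Δ) (F0 :: D0) -> sf σ' F0 = LEx a A ->
         gd s (map (sf σ') (Q ++ Γ) ++ G') (map (sf σ') D0 ++ D')) ->
     gd s (map (sf σ) (pa r ++ Γ) ++ G') (map (sf σ) Δ ++ D').
Proof.
  intros r Γ Δ σ F0 Hi Hps Hσ Hf Hp IHp.
  destruct Hi; simpl in Hps; try discriminate; injection Hps as <-; simpl in Hσ; try discriminate.
  injection Hσ as E1 ->. simpl in *.
  set (y := sw σ x).
  assert (IH1 := IHp _ _ (or_introl eq_refl) σ (LW x A :: Δ) ltac:(cnt) ltac:(simpl; congruence)).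
  simpl in IH1. rewrite E1 in IH1. fold y in IH1.
  pose proof (inv_Lex' s G' a A D' y HR) as Ri.
  assert (C : gd s ((LIn y a :: map (sf σ) Γ ++ G') ++ (LIn y a :: G')) ((map (sf σ) Δ ++ D') ++ D')).
  { apply (IH (LW y A)); [simpl; lia | eapply gd_perm; [exact IH1| cnt | cnt] |
      eapply gd_perm; [exact Ri| cnt | cnt]]. }
  rewrite E1. fold y.
  apply (contr_to s _ _ _ _ C); cnt.
Qed.

Lemma hand_bar s x a A B G' D' (HR : gd s (LCond x a A B :: G') D') (IH : CutIH s (LCond x a A B)) :
  forall r Γ Δ σ F0, inst s r -> ps r = [F0] -> sf σ F0 = LCond x a A B ->
     freshfor (eg r) (pa r ++ ps r ++ Γ ++ Δ) ->
     (forall Q R, In (Q, R) (prs r) -> gd s (Q ++ Γ) (R ++ Δ)) ->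
     (forall Q R, In (Q, R) (prs r) -> forall σ' D0, Permutation (R ++ Δ) (F0 :: D0) -> sf σ' F0 = LCond x a A B ->
         gd s (map (sf σ') (Q ++ Γ) ++ G') (map (sf σ') D0 ++ D')) ->
     gd s (map (sf σ) (pa r ++ Γ) ++ G') (map (sf σ) Δ ++ D').
Proof.
  intros r Γ Δ σ F0 Hi Hps Hσ Hf Hp IHp.
  destruct Hi; simpl in Hps; try discriminate; injection Hps as <-; simpl in Hσ; try discriminate.
  injection Hσ as E1 E2 -> ->. simpl in *.
  set (c1 := snl σ c).
  assert (IH1 := IHp _ _ (or_introl eq_refl) σ (LEx c A :: Δ) ltac:(cnt) ltac:(simpl; congruence)).
  assert (IH2 := IHp _ _ (or_intror (or_introl eq_refl)) σ (LAll c (Imp A B) :: Δ) ltac:(cnt)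
     ltac:(simpl; congruence)).
  simpl in IH1, IH2. rewrite E1, E2 in IH1, IH2. fold c1 in IH1, IH2.
  pose proof (inv_Lbar' s G' x a A B D' c1 HR) as Ri.
  assert (C1 : gd s ((LN c1 x :: LSub c1 a :: map (sf σ) Γ ++ G') ++ (LN c1 x :: LSub c1 a :: LAll c1 (Imp A B) :: G'))
                    ((map (sf σ) Δ ++ D') ++ D')).
  { apply (IH (LEx c1 A)); [simpl; lia | eapply gd_perm; [exact IH1| cnt | cnt] |
      eapply gd_perm; [exact Ri| cnt | cnt]]. }
  assert (C2 : gd s ((LN c1 x :: LSub c1 a :: map (sf σ) Γ ++ G') ++
                     ((LN c1 x :: LSub c1 a :: map (sf σ) Γ ++ G') ++ (LN c1 x :: LSub c1 a :: G')))
                    ((map (sf σ) Δ ++ D') ++ ((map (sf σ) Δ ++ D') ++ D'))).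
  { apply (IH (LAll c1 (Imp A B))); [simpl; lia | eapply gd_perm; [exact IH2| cnt | cnt] |
      eapply gd_perm; [exact C1| cnt | cnt]]. }
  rewrite E1, E2. fold c1.
  apply (contr_to s _ _ _ _ C2); cnt.
Qed.

Lemma hand_atom s x p G' D' (HR : gd s (LW x (Atom p) :: G') D') :
  forall r Γ Δ σ F0, inst s r -> ps r = [F0] -> sf σ F0 = LW x (Atom p) ->
     freshfor (eg r) (pa r ++ ps r ++ Γ ++ Δ) ->
     (forall Q R, In (Q, R) (prs r) -> gd s (Q ++ Γ) (R ++ Δ)) ->
     (forall Q R, In (Q, R) (prs r) -> forall σ' D0, Permutation (R ++ Δ) (F0 :: D0) -> sf σ' F0 = LW x (Atom p) ->
         gd s (map (sf σ') (Q ++ Γ) ++ G') (map (sf σ') D0 ++ D')) ->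
     gd s (map (sf σ) (pa r ++ Γ) ++ G') (map (sf σ) Δ ++ D').
Proof.
  intros r Γ Δ σ F0 Hi Hps Hσ Hf Hp IHp.
  destruct Hi; simpl in Hps; try discriminate; injection Hps as <-; simpl in Hσ; try discriminate.
  injection Hσ as E1 ->. simpl. rewrite E1.
  eapply gd_perm; [apply (weak s _ _ (map (sf σ) Γ) (map (sf σ) Δ) HR) | cnt | cnt].
Qed.

Lemma cut_all s : forall n F, wt F < n -> forall G D G' D',
  gd s G (F :: D) -> gd s (F :: G') D' -> gd s (G ++ G') (D ++ D').
Proof.
  induction n as [|n IHn]; intros F HF G D G' D' HL HR; [lia|].
  assert (IH : CutIH s F) by (intros F' HF'; intros; eapply IHn; eauto; lia).
  clear IHn.
  destruct F as [a x|x a|a b|x A|a A|a A|x a A B].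
  1-3: apply weak; eapply strengthen; [|exact HL]; simpl; auto.
  - destruct A as [p| |A B|A B|A B|A B].
    + pose proof (trackR s (LW x (Atom p)) G' D' (hand_atom s x p G' D' HR) G (LW x (Atom p) :: D) HL
        sid (LW x (Atom p)) D (Permutation_refl _) eq_refl) as T.
      rewrite !map_sid in T. exact T.
    + apply weak; eapply strengthen; [|exact HL]; simpl; auto.
    + pose proof (inv_Rand1 s x A B G D HL) as L1.
      pose proof (inv_Rand2 s x A B G D HL) as L2.
      pose proof (inv_Land s x A B G' D' HR) as R1.
      assert (C1 : gd s (G ++ LW x B :: G') (D ++ D')) by (apply (IH (LW x A)); [simpl; lia| exact L1 | exact R1]).
      assert (C2 : gd s (G ++ (G ++ G')) (D ++ (D ++ D'))).
      { apply (IH (LW x B)); [simpl; lia | exact L2 | eapply gd_perm; [exact C1| cnt | apply Permutation_refl]]. }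
      apply (contr_to s _ _ _ _ C2); cnt.
    + pose proof (inv_Ror s x A B G D HL) as L1.
      pose proof (inv_Lor1 s x A B G' D' HR) as R1.
      pose proof (inv_Lor2 s x A B G' D' HR) as R2.
      assert (C1 : gd s (G ++ G') ((LW x B :: D) ++ D')) by (apply (IH (LW x A)); [simpl; lia| exact L1 | exact R1]).
      assert (C2 : gd s ((G ++ G') ++ G') ((D ++ D') ++ D')).
      { apply (IH (LW x B)); [simpl; lia | eapply gd_perm; [exact C1| apply Permutation_refl | cnt] | exact R2]. }
      apply (contr_to s _ _ _ _ C2); cnt.
    + pose proof (inv_Rimp s x A B G D HL) as L1.
      pose proof (inv_Limp1 s x A B G' D' HR) as R1.
      pose proof (inv_Limp2 s x A B G' D' HR) as R2.
      assert (C1 : gd s (G' ++ G) (D' ++ LW x B :: D)) by (apply (IH (LW x A)); [simpl; lia| exact R1 | exact L1]).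
      assert (C2 : gd s ((G' ++ G) ++ G') ((D' ++ D) ++ D')).
      { apply (IH (LW x B)); [simpl; lia | eapply gd_perm; [exact C1| apply Permutation_refl | cnt] | exact R2]. }
      apply (contr_to s _ _ _ _ C2); cnt.
    + pose proof (trackL s (LW x (Cond A B)) G D (hand_cond s x A B G D HL IH) (LW x (Cond A B) :: G') D' HR
        sid (LW x (Cond A B)) G' (Permutation_refl _) eq_refl) as T.
      rewrite !map_sid in T. exact T.
  - pose proof (trackR s (LEx a A) G' D' (hand_ex s a A G' D' HR IH) G (LEx a A :: D) HL
        sid (LEx a A) D (Permutation_refl _) (sf_sid _)) as T.
    rewrite !map_sid in T. exact T.
  - pose proof (trackL s (LAll a A) G D (hand_all s a A G D HL IH) (LAll a A :: G') D' HR
        sid (LAll a A) G' (Permutation_refl _) (sf_sid _)) as T.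
    rewrite !map_sid in T. exact T.
  - pose proof (trackR s (LCond x a A B) G' D' (hand_bar s x a A B G' D' HR IH) G (LCond x a A B :: D) HL
        sid (LCond x a A B) D (Permutation_refl _) (sf_sid _)) as T.
    rewrite !map_sid in T. exact T.
Qed.

Theorem mainTheorem12 :
  forall (s : calc) (F : lform) (G D G' D' : list lform),
    der s G (F :: D) -> der s (F :: G') D' -> der s (G ++ G') (D ++ D').
Proof.
  intros s F G D G' D' H1 H2. apply gd_der.
  apply (cut_all s (S (wt F)) F ltac:(lia)); apply der_gd; assumption.
Qed.
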